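(* Let $\rho>0$ and let $v$ be a bounded, $1$-periodic (i.e. $v(z+1)=v(z)$), non-constant analytic function on the strip $\{z\in\mathbb{C}:|\operatorname{Im} z|<\rho\}$. Then for every $0<\delta<\rho$ and every $k\in\mathbb{N}$ there exists $\epsilon>0$, depending only on $\delta$, $k$ and $v$, such that for every $k$-tuple $(E_1,\dots,E_k)\in\mathbb{R}^k$, $$\sup_{\delta/2\le y\le\delta}\ \min_{1\le j\le k}\ \inf_{x\in[0,1]}\big|v(x+iy)-E_j\big|>\epsilon .$$ *)

(* Defs.v *)
From Stdlib Require Import Reals.
From Coquelicot Require Import Coquelicot.
Open Scope R_scope.

Definition strip (rho : R) (z : C) : Prop := Rabs (Im z) < rho.

Definition analytic_on_strip (rho : R) (v : C -> C) : Prop :=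
  forall z : C, strip rho z -> @ex_derive C_AbsRing C_NormedModule v z.

Definition bounded_on_strip (rho : R) (v : C -> C) : Prop :=
  exists M : R, forall z : C, strip rho z -> Cmod (v z) <= M.

(* 1-periodic: v(z+1) = v(z) on the strip (the strip is invariant under z+1). *)
Definition one_periodic_on_strip (rho : R) (v : C -> C) : Prop :=
  forall z : C, strip rho z -> v (Cplus z (RtoC 1)) = v z.

Definition nonconstant_on_strip (rho : R) (v : C -> C) : Prop :=
  exists z1 z2 : C, strip rho z1 /\ strip rho z2 /\ v z1 <> v z2.

(* Main.v *)
Require Import Defs.
From Stdlib Require Import Reals.
From Coquelicot Require Import Coquelicot.
From Stdlib Require Import Lra Lia Classical ClassicalEpsilon FunctionalExtensionality.
Open Scope R_scope.
Arguments RInt : simpl never.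

Lemma Cmod_re (z : C) : Rabs (Re z) <= Cmod z.
Proof. apply re_le_Cmod. Qed.

Lemma Cmod_im (z : C) : Rabs (Im z) <= Cmod z.
Proof. destruct z as [x y]; simpl. generalize (Rmax_Cmod (x,y)); simpl. unfold Rmax. destruct (Rle_dec _ _); simpl; lra. Qed.

Lemma Cmod_pair_le (x y : R) : Cmod (x, y) <= Rabs x + Rabs y.
Proof.
  replace (x, y) with (RtoC x + Ci * RtoC y)%C.
  2:{ unfold RtoC, Ci, Cplus, Cmult; simpl. f_equal; ring. }
  eapply Rle_trans. apply Cmod_triangle.
  rewrite Cmod_mult, !Cmod_R. unfold Ci.
  replace (Cmod (0,1)) with 1. lra.
  unfold Cmod; simpl. replace (0*(0*1)+1*(1*1)) with 1 by ring. rewrite sqrt_1; auto.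
Qed.

Lemma Cmod_le_re_im (z : C) : Cmod z <= Rabs (Re z) + Rabs (Im z).
Proof. destruct z as [x y]. apply Cmod_pair_le. Qed.

Lemma Cmod_minus_sym (a b : C) : Cmod (a - b) = Cmod (b - a).
Proof. rewrite <- Cmod_opp. f_equal. ring. Qed.

Lemma Cmod_tri3 (a b c : C) : Cmod (a - c) <= Cmod (a - b) + Cmod (b - c).
Proof. replace (a - c)%C with ((a - b) + (b - c))%C by ring. apply Cmod_triangle. Qed.

Lemma Cmod_rev_tri (a b : C) : Cmod a - Cmod b <= Cmod (a - b).
Proof. generalize (Cmod_tri3 a 0 b). replace (a-0)%C with a by ring.
  replace (0 - b)%C with (-b)%C by ring. rewrite Cmod_opp.
  generalize (Cmod_tri3 a b 0). replace (a-0)%C with a by ring.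
  replace (b-0)%C with b by ring. lra. Qed.

Definition contC (f : C -> C) (z : C) : Prop :=
  forall eps, 0 < eps -> exists d, 0 < d /\
    forall u, Cmod (u - z) < d -> Cmod (f u - f z) < eps.

Definition holAt (f : C -> C) (z : C) (l : C) : Prop :=
  forall eps, 0 < eps -> exists d, 0 < d /\
    forall u, Cmod (u - z) < d -> Cmod (f u - f z - l * (u - z)) <= eps * Cmod (u - z).

Definition hol (f : C -> C) (z : C) : Prop := exists l, holAt f z l.

Lemma contC_const (c z : C) : contC (fun _ => c) z.
Proof. intros e He. exists 1. split. lra. intros u _. replace (c - c)%C with (RtoC 0) by ring.
  rewrite Cmod_0; auto. Qed.

Lemma contC_id (z : C) : contC (fun u => u) z.
Proof. intros e He. exists e. split; auto. Qed.

Lemma contC_plus f g z : contC f z -> contC g z -> contC (fun u => f u + g u)%C z.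
Proof.
  intros Hf Hg e He. destruct (Hf (e/2)) as [d1 [Hd1 H1]]. lra.
  destruct (Hg (e/2)) as [d2 [Hd2 H2]]. lra.
  exists (Rmin d1 d2). split. apply Rmin_pos; auto.
  intros u Hu. replace (f u + g u - (f z + g z))%C with ((f u - f z) + (g u - g z))%C by ring.
  eapply Rle_lt_trans. apply Cmod_triangle.
  assert (Cmod (u - z) < d1) by (eapply Rlt_le_trans; [apply Hu| apply Rmin_l]).
  assert (Cmod (u - z) < d2) by (eapply Rlt_le_trans; [apply Hu| apply Rmin_r]).
  specialize (H1 u H). specialize (H2 u H0). lra.
Qed.

Lemma contC_opp f z : contC f z -> contC (fun u => - f u)%C z.
Proof.
  intros Hf e He. destruct (Hf e He) as [d [Hd H]]. exists d; split; auto.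
  intros u Hu. replace (- f u - - f z)%C with (- (f u - f z))%C by ring.
  rewrite Cmod_opp. auto. Qed.

Lemma contC_minus f g z : contC f z -> contC g z -> contC (fun u => f u - g u)%C z.
Proof. intros. apply (contC_plus f (fun u => - g u)%C); auto. apply contC_opp; auto. Qed.

Lemma prod_lt_aux a b c d : 0 <= a -> a < c -> 0 <= b -> b <= d -> 0 < d -> a * b < c * d.
Proof. intros. apply Rle_lt_trans with (a * d). apply Rmult_le_compat_l; auto.
  apply Rmult_lt_compat_r; auto. Qed.

Lemma contC_mult f g z : contC f z -> contC g z -> contC (fun u => f u * g u)%C z.
Proof.
  intros Hf Hg e He.
  set (A := Cmod (f z)). set (B := Cmod (g z)).
  assert (HA : 0 <= A) by apply Cmod_ge_0. assert (HB : 0 <= B) by apply Cmod_ge_0.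
  destruct (Hf (e / (2 * (B + 1)))) as [d1 [Hd1 H1]].
  { apply Rdiv_lt_0_compat; lra. }
  destruct (Hg (Rmin 1 (e / (2 * (A + 1))))) as [d2 [Hd2 H2]].
  { apply Rmin_pos. lra. apply Rdiv_lt_0_compat; lra. }
  exists (Rmin d1 d2). split. apply Rmin_pos; auto.
  intros u Hu.
  assert (Hu1 : Cmod (u - z) < d1) by (eapply Rlt_le_trans; [apply Hu| apply Rmin_l]).
  assert (Hu2 : Cmod (u - z) < d2) by (eapply Rlt_le_trans; [apply Hu| apply Rmin_r]).
  specialize (H1 u Hu1). specialize (H2 u Hu2).
  replace (f u * g u - f z * g z)%C with ((f u - f z) * g u + f z * (g u - g z))%C by ring.
  eapply Rle_lt_trans. apply Cmod_triangle. rewrite !Cmod_mult.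
  assert (Hgu : Cmod (g u) <= B + 1).
  { generalize (Cmod_tri3 (g u) (g z) 0). replace (g u - 0)%C with (g u) by ring.
    replace (g z - 0)%C with (g z) by ring. fold B.
    generalize (Rmin_l 1 (e / (2 * (A + 1)))). lra. }
  assert (H3 : Cmod (g u - g z) < e / (2 * (A + 1))).
  { eapply Rlt_le_trans. apply H2. apply Rmin_r. }
  fold A.
  assert (T1 : Cmod (f u - f z) * Cmod (g u) < e / (2 * (B + 1)) * (B + 1)).
  { apply prod_lt_aux; try apply Cmod_ge_0; lra. }
  assert (T2 : Cmod (g u - g z) * A < e / (2 * (A + 1)) * (A + 1)).
  { apply prod_lt_aux; try apply Cmod_ge_0; lra. }
  assert (e / (2 * (B + 1)) * (B + 1) = e / 2) by (field; lra).
  assert (e / (2 * (A + 1)) * (A + 1) = e / 2) by (field; lra).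
  rewrite (Rmult_comm A). lra.
Qed.

Lemma contC_inv f z : contC f z -> f z <> 0%C -> contC (fun u => / f u)%C z.
Proof.
  intros Hf Hz e He.
  set (A := Cmod (f z)). assert (HA : 0 < A) by (apply Cmod_gt_0; auto).
  destruct (Hf (Rmin (A/2) (e * A * A / 2))) as [d [Hd H]].
  { apply Rmin_pos. lra. apply Rdiv_lt_0_compat; [|lra]. apply Rmult_lt_0_compat; [apply Rmult_lt_0_compat|]; lra. }
  exists d; split; auto. intros u Hu. specialize (H u Hu).
  assert (H1 : Cmod (f u - f z) < A / 2) by (eapply Rlt_le_trans; [apply H| apply Rmin_l]).
  assert (H2 : Cmod (f u - f z) < e * A * A / 2) by (eapply Rlt_le_trans; [apply H| apply Rmin_r]).
  assert (Hfu : A / 2 < Cmod (f u)).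
  { generalize (Cmod_rev_tri (f z) (f u)). rewrite (Cmod_minus_sym (f z)). fold A. lra. }
  assert (Hfu0 : f u <> 0%C). { intro E. rewrite E, Cmod_0 in Hfu. lra. }
  replace (/ f u - / f z)%C with ((f z - f u) / (f u * f z))%C by (field; auto).
  rewrite Cmod_div. 2:{ apply Cmult_neq_0; auto. }
  rewrite Cmod_mult, (Cmod_minus_sym (f z)). fold A.
  apply Rmult_lt_reg_r with (Cmod (f u) * A). apply Rmult_lt_0_compat; lra.
  unfold Rdiv. rewrite Rmult_assoc, Rinv_l. 2:{ apply Rgt_not_eq. apply Rmult_lt_0_compat; lra. }
  rewrite Rmult_1_r. apply Rlt_le_trans with (e * A * A / 2); auto.
  replace (e * A * A / 2) with (e * (A / 2 * A)) by field.
  apply Rmult_le_compat_l. lra. apply Rmult_le_compat_r; lra.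
Qed.

Lemma contC_pow f z n : contC f z -> contC (fun u => (f u) ^ n)%C z.
Proof. intros Hf. induction n; simpl. apply contC_const. apply contC_mult; auto. Qed.

Lemma holAt_contC f z l : holAt f z l -> contC f z.
Proof.
  intros H e He. destruct (H 1 Rlt_0_1) as [d [Hd Hd']].
  exists (Rmin d (e / (1 + Cmod l + 1))). split. apply Rmin_pos; auto.
  apply Rdiv_lt_0_compat; auto. generalize (Cmod_ge_0 l); lra.
  intros u Hu. assert (Hu1 : Cmod (u - z) < d) by (eapply Rlt_le_trans; [apply Hu| apply Rmin_l]).
  assert (Hu2 : Cmod (u - z) < e / (1 + Cmod l + 1)) by (eapply Rlt_le_trans; [apply Hu| apply Rmin_r]).
  specialize (Hd' u Hu1).
  replace (f u - f z)%C with ((f u - f z - l * (u - z)) + l * (u - z))%C by ring.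
  eapply Rle_lt_trans. apply Cmod_triangle. rewrite Cmod_mult.
  assert (0 <= Cmod l) by apply Cmod_ge_0. assert (0 <= Cmod (u - z)) by apply Cmod_ge_0.
  apply Rle_lt_trans with ((1 + Cmod l) * Cmod (u - z)). nra.
  apply Rle_lt_trans with ((1 + Cmod l) * (e / (1 + Cmod l + 1))).
  apply Rmult_le_compat_l; lra.
  apply Rmult_lt_reg_r with (1 + Cmod l + 1). lra.
  field_simplify; lra.
Qed.

Definition contR (f : R -> C) (t : R) : Prop :=
  forall eps, 0 < eps -> exists d, 0 < d /\
    forall s, Rabs (s - t) < d -> Cmod (f s - f t) < eps.

Definition cont_on (f : R -> C) (a b : R) : Prop := forall t, a <= t <= b -> contR f t.

Lemma contR_Re f t : contR f t -> continuous (fun s => Re (f s)) t.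
Proof.
  intros H. apply continuity_pt_filterlim.
  unfold continuity_pt, continue_in, limit1_in, limit_in; simpl; unfold R_dist.
  intros e He. destruct (H e He) as [d [Hd H']]. exists d; split; auto.
  intros x [_ Hx]. eapply Rle_lt_trans. 2: apply (H' x Hx).
  eapply Rle_trans. 2: apply Cmod_re. simpl. right. reflexivity.
Qed.

Lemma contR_Im f t : contR f t -> continuous (fun s => Im (f s)) t.
Proof.
  intros H. apply continuity_pt_filterlim.
  unfold continuity_pt, continue_in, limit1_in, limit_in; simpl; unfold R_dist.
  intros e He. destruct (H e He) as [d [Hd H']]. exists d; split; auto.
  intros x [_ Hx]. eapply Rle_lt_trans. 2: apply (H' x Hx).
  eapply Rle_trans. 2: apply Cmod_im. simpl. right. reflexivity.
Qed.

Lemma ex_Re f a b : a <= b -> cont_on f a b -> ex_RInt (fun s => Re (f s)) a b.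
Proof.
  intros Hab H. apply (@ex_RInt_continuous R_CompleteNormedModule). rewrite Rmin_left, Rmax_right; auto.
  intros z Hz. apply contR_Re. apply H; auto.
Qed.

Lemma ex_Im f a b : a <= b -> cont_on f a b -> ex_RInt (fun s => Im (f s)) a b.
Proof.
  intros Hab H. apply (@ex_RInt_continuous R_CompleteNormedModule). rewrite Rmin_left, Rmax_right; auto.
  intros z Hz. apply contR_Im. apply H; auto.
Qed.

Definition CInt (f : R -> C) (a b : R) : C :=
  (RInt (fun t => Re (f t)) a b, RInt (fun t => Im (f t)) a b).

Lemma RInt_plusR (f g : R -> R) a b : ex_RInt f a b -> ex_RInt g a b ->
  RInt (fun x => f x + g x) a b = RInt f a b + RInt g a b.
Proof. intros. apply (RInt_plus f g a b); auto. Qed.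

Lemma RInt_minusR (f g : R -> R) a b : ex_RInt f a b -> ex_RInt g a b ->
  RInt (fun x => f x - g x) a b = RInt f a b - RInt g a b.
Proof. intros. apply (RInt_minus f g a b); auto. Qed.

Lemma RInt_scalR (f : R -> R) a b l : ex_RInt f a b ->
  RInt (fun x => l * f x) a b = l * RInt f a b.
Proof. intros. apply (RInt_scal f a b l); auto. Qed.

Lemma ex_RInt_scalR (f : R -> R) a b l : ex_RInt f a b -> ex_RInt (fun x => l * f x) a b.
Proof. intros. apply (ex_RInt_scal f a b l); auto. Qed.

Lemma CInt_plus f g a b : a <= b -> cont_on f a b -> cont_on g a b ->
  CInt (fun t => f t + g t)%C a b = (CInt f a b + CInt g a b)%C.
Proof.
  intros Hab Hf Hg. unfold CInt, Cplus; cbn -[RInt]. f_equal.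
  - rewrite <- RInt_plusR; try apply ex_Re; auto.
  - rewrite <- RInt_plusR; try apply ex_Im; auto.
Qed.

Lemma CInt_cmul (c : C) f a b : a <= b -> cont_on f a b ->
  CInt (fun t => c * f t)%C a b = (c * CInt f a b)%C.
Proof.
  intros Hab Hf. destruct c as [c1 c2]. unfold CInt, Cmult; cbn -[RInt].
  assert (E1 := ex_Re f a b Hab Hf). assert (E2 := ex_Im f a b Hab Hf).
  f_equal.
  - rewrite (RInt_minusR (fun t => c1 * Re (f t)) (fun t => c2 * Im (f t))); try apply ex_RInt_scalR; auto.
    rewrite (RInt_scalR (fun t => Re (f t))), (RInt_scalR (fun t => Im (f t))); auto.
  - rewrite (RInt_plusR (fun t => c1 * Im (f t)) (fun t => c2 * Re (f t))); try apply ex_RInt_scalR; auto.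
    rewrite (RInt_scalR (fun t => Re (f t))), (RInt_scalR (fun t => Im (f t))); auto.
Qed.

Lemma CInt_opp f a b : a <= b -> cont_on f a b ->
  CInt (fun t => - f t)%C a b = (- CInt f a b)%C.
Proof.
  intros Hab Hf. replace (- CInt f a b)%C with (RtoC (-1) * CInt f a b)%C by (unfold RtoC; apply injective_projections; simpl; ring).
  rewrite <- CInt_cmul; auto. unfold CInt. f_equal; apply RInt_ext; intros; cbn -[RInt]; ring.
Qed.

Lemma cont_on_plus f g a b : cont_on f a b -> cont_on g a b -> cont_on (fun t => f t + g t)%C a b.
Proof.
  intros Hf Hg t Ht e He. destruct (Hf t Ht (e/2)) as [d1 [Hd1 H1]]. lra.
  destruct (Hg t Ht (e/2)) as [d2 [Hd2 H2]]. lra.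
  exists (Rmin d1 d2). split. apply Rmin_pos; auto.
  intros s Hs. replace (f s + g s - (f t + g t))%C with ((f s - f t) + (g s - g t))%C by ring.
  eapply Rle_lt_trans. apply Cmod_triangle.
  assert (Rabs (s - t) < d1) by (eapply Rlt_le_trans; [apply Hs| apply Rmin_l]).
  assert (Rabs (s - t) < d2) by (eapply Rlt_le_trans; [apply Hs| apply Rmin_r]).
  specialize (H1 s H). specialize (H2 s H0). lra.
Qed.

Lemma cont_on_cmul c f a b : cont_on f a b -> cont_on (fun t => c * f t)%C a b.
Proof.
  intros Hf t Ht e He. destruct (Hf t Ht (e / (Cmod c + 1))) as [d [Hd H]].
  apply Rdiv_lt_0_compat; auto. generalize (Cmod_ge_0 c); lra.
  exists d; split; auto. intros s Hs. specialize (H s Hs).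
  replace (c * f s - c * f t)%C with (c * (f s - f t))%C by ring. rewrite Cmod_mult.
  assert (0 <= Cmod c) by apply Cmod_ge_0.
  apply Rle_lt_trans with ((Cmod c + 1) * Cmod (f s - f t)).
  apply Rmult_le_compat_r. apply Cmod_ge_0. lra.
  apply Rlt_le_trans with ((Cmod c + 1) * (e / (Cmod c + 1))).
  apply Rmult_lt_compat_l; lra. right; field; lra.
Qed.

Lemma cont_on_opp f a b : cont_on f a b -> cont_on (fun t => - f t)%C a b.
Proof.
  intros H. assert (E: (fun t => - f t)%C = (fun t => RtoC (-1) * f t)%C).
  { apply functional_extensionality; intros; unfold RtoC; apply injective_projections; simpl; ring. }
  rewrite E. apply cont_on_cmul; auto.
Qed.

Lemma CInt_minus f g a b : a <= b -> cont_on f a b -> cont_on g a b ->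
  CInt (fun t => f t - g t)%C a b = (CInt f a b - CInt g a b)%C.
Proof.
  intros. unfold Cminus at 1. rewrite (CInt_plus f (fun t => - g t)%C); auto.
  rewrite CInt_opp; auto. apply cont_on_opp; auto.
Qed.

Lemma CInt_ext f g a b : a <= b -> (forall t, a <= t <= b -> f t = g t) -> CInt f a b = CInt g a b.
Proof.
  intros Hab H. unfold CInt. f_equal; apply RInt_ext; rewrite Rmin_left, Rmax_right; auto;
  intros x Hx; rewrite H; auto; lra.
Qed.

Lemma CInt_chasles f a b c : a <= b -> b <= c -> cont_on f a c ->
  (CInt f a b + CInt f b c)%C = CInt f a c.
Proof.
  intros Hab Hbc Hf. unfold CInt, Cplus; cbn -[RInt]. f_equal.
  - apply (RInt_Chasles (fun t => Re (f t))); apply ex_Re; auto; intros t Ht; apply Hf; lra.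
  - apply (RInt_Chasles (fun t => Im (f t))); apply ex_Im; auto; intros t Ht; apply Hf; lra.
Qed.

Lemma RInt_pt (f : R -> R) a : RInt f a a = 0.
Proof. apply (RInt_point a f). Qed.

Lemma CInt_point f a : CInt f a a = RtoC 0.
Proof. unfold CInt. rewrite !RInt_pt. reflexivity. Qed.

Lemma Cmod_conj' (c : C) : Cmod (Cconj c) = Cmod c.
Proof. destruct c; unfold Cmod, Cconj; simpl. f_equal. ring. Qed.

Lemma Re_CInt g a b : Re (CInt g a b) = RInt (fun t => Re (g t)) a b.
Proof. reflexivity. Qed.

Lemma CInt_bound f a b B : a <= b -> cont_on f a b ->
  (forall t, a <= t <= b -> Cmod (f t) <= B) -> Cmod (CInt f a b) <= (b - a) * B.
Proof.
  intros Hab Hf HB.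
  destruct (Req_dec (Cmod (CInt f a b)) 0) as [E|E].
  { rewrite E. destruct (Req_dec a b). subst. lra.
    assert (0 <= B). { apply Rle_trans with (Cmod (f a)). apply Cmod_ge_0. apply HB; lra. }
    apply Rmult_le_pos; lra. }
  remember (CInt f a b) as I eqn:HI. set (m := Cmod I) in *.
  assert (Hm : 0 < m). { generalize (Cmod_ge_0 I). fold m. lra. }
  set (u := (Cconj I / RtoC m)%C).
  assert (HmC : RtoC m <> 0%C). { intro H. injection H. lra. }
  assert (Hu : Cmod u = 1).
  { unfold u. rewrite Cmod_div; auto. rewrite Cmod_conj', Cmod_R, Rabs_pos_eq; fold m; try lra. field. lra. }
  assert (HuI : (u * I)%C = RtoC m).
  { unfold u. replace (Cconj I / RtoC m * I)%C with ((I * Cconj I) / RtoC m)%C by (field; auto).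
    rewrite <- Cmod2_conj. fold m. replace (RtoC (m ^ 2)) with (RtoC m * RtoC m)%C.
    field; auto. unfold RtoC, Cmult; apply injective_projections; simpl; ring. }
  assert (Heq : m = Re (CInt (fun t => u * f t)%C a b)).
  { rewrite CInt_cmul; auto. rewrite <- HI, HuI. reflexivity. }
  clearbody u. rewrite Heq, Re_CInt.
  apply Rle_trans with (RInt (fun _ => B) a b).
  2:{ rewrite RInt_const. right. reflexivity. }
  apply RInt_le; auto. apply ex_Re; auto. apply cont_on_cmul; auto.
  apply ex_RInt_const.
  intros x Hx. eapply Rle_trans. apply Rle_abs. eapply Rle_trans. apply Cmod_re.
  rewrite Cmod_mult, Hu, Rmult_1_l. apply HB; lra.
Qed.

Definition derR (F : R -> C) (t : R) (l : C) : Prop :=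
  forall eps, 0 < eps -> exists d, 0 < d /\
    forall s, Rabs (s - t) < d -> Cmod (F s - F t - RtoC (s - t) * l) <= eps * Rabs (s - t).

Lemma derR_Re F t l : derR F t l -> is_derive (fun s => Re (F s)) t (Re l).
Proof.
  intros H. apply is_derive_Reals. intros e He.
  destruct (H (e/2)) as [d [Hd H']]. lra.
  exists (mkposreal d Hd). intros h Hh0 Hh. simpl in Hh.
  specialize (H' (t + h)). replace (t + h - t) with h in H' by ring.
  specialize (H' Hh).
  assert (Hr : Rabs (Re (F (t + h) - F t - RtoC h * l)) <= e / 2 * Rabs h) by (eapply Rle_trans; [apply Cmod_re| auto]).
  replace (Re (F (t + h) - F t - RtoC h * l)) with ((Re (F (t+h)) - Re (F t)) - h * Re l) in Hr
    by (destruct (F (t + h)), (F t), l; simpl; ring).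
  replace ((Re (F (t + h)) - Re (F t)) / h - Re l) with (((Re (F (t+h)) - Re (F t)) - h * Re l) / h)
    by (field; auto).
  unfold Rdiv. rewrite Rabs_mult, Rabs_inv.
  assert (0 < Rabs h) by (apply Rabs_pos_lt; auto).
  apply Rmult_lt_reg_r with (Rabs h); auto. rewrite Rmult_assoc, Rinv_l by lra. nra.
Qed.

Lemma derR_Im F t l : derR F t l -> is_derive (fun s => Im (F s)) t (Im l).
Proof.
  intros H. apply is_derive_Reals. intros e He.
  destruct (H (e/2)) as [d [Hd H']]. lra.
  exists (mkposreal d Hd). intros h Hh0 Hh. simpl in Hh.
  specialize (H' (t + h)). replace (t + h - t) with h in H' by ring.
  specialize (H' Hh).
  assert (Hr : Rabs (Im (F (t + h) - F t - RtoC h * l)) <= e / 2 * Rabs h) by (eapply Rle_trans; [apply Cmod_im| auto]).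
  replace (Im (F (t + h) - F t - RtoC h * l)) with ((Im (F (t+h)) - Im (F t)) - h * Im l) in Hr
    by (destruct (F (t + h)), (F t), l; simpl; ring).
  replace ((Im (F (t + h)) - Im (F t)) / h - Im l) with (((Im (F (t+h)) - Im (F t)) - h * Im l) / h)
    by (field; auto).
  unfold Rdiv. rewrite Rabs_mult, Rabs_inv.
  assert (0 < Rabs h) by (apply Rabs_pos_lt; auto).
  apply Rmult_lt_reg_r with (Rabs h); auto. rewrite Rmult_assoc, Rinv_l by lra. nra.
Qed.

Lemma CInt_FTC F f a b : a <= b -> (forall t, a <= t <= b -> derR F t (f t)) -> cont_on f a b ->
  CInt f a b = (F b - F a)%C.
Proof.
  intros Hab HF Hf. unfold CInt. apply injective_projections; cbn -[RInt].
  - apply is_RInt_unique. apply (is_RInt_derive (fun s => Re (F s)) (fun s => Re (f s))).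
    + rewrite Rmin_left, Rmax_right; auto. intros; apply derR_Re; auto.
    + rewrite Rmin_left, Rmax_right; auto. intros; apply contR_Re; auto.
  - apply is_RInt_unique. apply (is_RInt_derive (fun s => Im (F s)) (fun s => Im (f s))).
    + rewrite Rmin_left, Rmax_right; auto. intros; apply derR_Im; auto.
    + rewrite Rmin_left, Rmax_right; auto. intros; apply contR_Im; auto.
Qed.

Definition Rect (f : C -> C) (x1 x2 y1 y2 : R) : C :=
  (CInt (fun x => f (x, y1)) x1 x2 + Ci * CInt (fun y => f (x2, y)) y1 y2
  - CInt (fun x => f (x, y2)) x1 x2 - Ci * CInt (fun y => f (x1, y)) y1 y2)%C.

Definition inRect (x1 x2 y1 y2 : R) (z : C) : Prop :=
  x1 <= Re z <= x2 /\ y1 <= Im z <= y2.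

Definition ContRect f x1 x2 y1 y2 : Prop := forall z, inRect x1 x2 y1 y2 z -> contC f z.

Lemma Cmod_hdiff (s x y : R) : Cmod ((s, y) - (x, y))%C = Rabs (s - x).
Proof.
  replace ((s, y) - (x, y))%C with (RtoC (s - x)).
  apply Cmod_R. unfold RtoC; apply injective_projections; simpl; ring.
Qed.

Lemma Cmod_vdiff (s x y : R) : Cmod ((x, s) - (x, y))%C = Rabs (s - y).
Proof.
  replace ((x, s) - (x, y))%C with (Ci * RtoC (s - y))%C.
  rewrite Cmod_mult, Cmod_R. unfold Ci, Cmod; simpl.
  replace (0 * (0 * 1) + 1 * (1 * 1)) with 1 by ring. rewrite sqrt_1. ring.
  unfold RtoC, Ci; apply injective_projections; simpl; ring.
Qed.

Lemma contC_hside f x y : contC f (x, y) -> contR (fun s => f (s, y)) x.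
Proof.
  intros H e He. destruct (H e He) as [d [Hd H']]. exists d; split; auto.
  intros s Hs. apply H'. rewrite Cmod_hdiff; auto.
Qed.

Lemma contC_vside f x y : contC f (x, y) -> contR (fun s => f (x, s)) y.
Proof.
  intros H e He. destruct (H e He) as [d [Hd H']]. exists d; split; auto.
  intros s Hs. apply H'. rewrite Cmod_vdiff; auto.
Qed.

Lemma cont_on_h f x1 x2 y1 y2 y : ContRect f x1 x2 y1 y2 -> y1 <= y <= y2 ->
  cont_on (fun x => f (x, y)) x1 x2.
Proof. intros H Hy t Ht. apply contC_hside. apply H. split; simpl; auto. Qed.

Lemma cont_on_v f x1 x2 y1 y2 x : ContRect f x1 x2 y1 y2 -> x1 <= x <= x2 ->
  cont_on (fun y => f (x, y)) y1 y2.
Proof. intros H Hx t Ht. apply contC_vside. apply H. split; simpl; auto. Qed.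

Lemma ContRect_plus f g x1 x2 y1 y2 : ContRect f x1 x2 y1 y2 -> ContRect g x1 x2 y1 y2 ->
  ContRect (fun z => f z + g z)%C x1 x2 y1 y2.
Proof. intros Hf Hg z Hz. apply contC_plus; auto. Qed.

Lemma ContRect_minus f g x1 x2 y1 y2 : ContRect f x1 x2 y1 y2 -> ContRect g x1 x2 y1 y2 ->
  ContRect (fun z => f z - g z)%C x1 x2 y1 y2.
Proof. intros Hf Hg z Hz. apply contC_minus; auto. Qed.

Lemma ContRect_cmul c f x1 x2 y1 y2 : ContRect f x1 x2 y1 y2 ->
  ContRect (fun z => c * f z)%C x1 x2 y1 y2.
Proof. intros Hf z Hz. apply contC_mult; auto. apply contC_const. Qed.

Lemma ContRect_sub f x1 x2 y1 y2 a1 a2 b1 b2 : ContRect f x1 x2 y1 y2 ->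
  x1 <= a1 -> a2 <= x2 -> y1 <= b1 -> b2 <= y2 -> ContRect f a1 a2 b1 b2.
Proof. intros H h1 h2 h3 h4 z [Hx Hy]. apply H. split; lra. Qed.

Definition onBd (x1 x2 y1 y2 : R) (z : C) : Prop :=
  inRect x1 x2 y1 y2 z /\ (Re z = x1 \/ Re z = x2 \/ Im z = y1 \/ Im z = y2).

Definition ContBd f x1 x2 y1 y2 : Prop := forall z, onBd x1 x2 y1 y2 z -> contC f z.

Lemma ContRect_Bd f x1 x2 y1 y2 : ContRect f x1 x2 y1 y2 -> ContBd f x1 x2 y1 y2.
Proof. intros H z [Hz _]. auto. Qed.

Lemma cont_on_hb f x1 x2 y1 y2 y : ContBd f x1 x2 y1 y2 -> y1 <= y2 -> (y = y1 \/ y = y2) ->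
  cont_on (fun x => f (x, y)) x1 x2.
Proof. intros H Hy Hy' t Ht. apply contC_hside. apply H. split. split; simpl; lra. simpl; tauto. Qed.

Lemma cont_on_vb f x1 x2 y1 y2 x : ContBd f x1 x2 y1 y2 -> x1 <= x2 -> (x = x1 \/ x = x2) ->
  cont_on (fun y => f (x, y)) y1 y2.
Proof. intros H Hx Hx' t Ht. apply contC_vside. apply H. split. split; simpl; lra. simpl; tauto. Qed.

Lemma ContBd_plus f g x1 x2 y1 y2 : ContBd f x1 x2 y1 y2 -> ContBd g x1 x2 y1 y2 ->
  ContBd (fun z => f z + g z)%C x1 x2 y1 y2.
Proof. intros Hf Hg z Hz. apply contC_plus; auto. Qed.

Lemma ContBd_minus f g x1 x2 y1 y2 : ContBd f x1 x2 y1 y2 -> ContBd g x1 x2 y1 y2 ->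
  ContBd (fun z => f z - g z)%C x1 x2 y1 y2.
Proof. intros Hf Hg z Hz. apply contC_minus; auto. Qed.

Lemma ContBd_cmul c f x1 x2 y1 y2 : ContBd f x1 x2 y1 y2 ->
  ContBd (fun z => c * f z)%C x1 x2 y1 y2.
Proof. intros Hf z Hz. apply contC_mult; auto. apply contC_const. Qed.

Section RectLemmas.
Variables (x1 x2 y1 y2 : R).
Hypothesis (Hx : x1 <= x2) (Hy : y1 <= y2).

Lemma Rect_plus f g : ContBd f x1 x2 y1 y2 -> ContBd g x1 x2 y1 y2 ->
  Rect (fun z => f z + g z)%C x1 x2 y1 y2 = (Rect f x1 x2 y1 y2 + Rect g x1 x2 y1 y2)%C.
Proof.
  intros Hf Hg. unfold Rect.
  rewrite (CInt_plus (fun x => f (x, y1)) (fun x => g (x, y1))); try (apply (cont_on_hb _ x1 x2 y1 y2); auto; tauto).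
  rewrite (CInt_plus (fun x => f (x, y2)) (fun x => g (x, y2))); try (apply (cont_on_hb _ x1 x2 y1 y2); auto; tauto).
  rewrite (CInt_plus (fun y => f (x1, y)) (fun y => g (x1, y))); try (apply (cont_on_vb _ x1 x2 y1 y2); auto; tauto).
  rewrite (CInt_plus (fun y => f (x2, y)) (fun y => g (x2, y))); try (apply (cont_on_vb _ x1 x2 y1 y2); auto; tauto).
  ring. all: try assumption.
Qed.

Lemma Rect_cmul c f : ContBd f x1 x2 y1 y2 ->
  Rect (fun z => c * f z)%C x1 x2 y1 y2 = (c * Rect f x1 x2 y1 y2)%C.
Proof.
  intros Hf. unfold Rect.
  rewrite (CInt_cmul c (fun x => f (x, y1))); try (apply (cont_on_hb _ x1 x2 y1 y2); auto; tauto).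
  rewrite (CInt_cmul c (fun x => f (x, y2))); try (apply (cont_on_hb _ x1 x2 y1 y2); auto; tauto).
  rewrite (CInt_cmul c (fun y => f (x1, y))); try (apply (cont_on_vb _ x1 x2 y1 y2); auto; tauto).
  rewrite (CInt_cmul c (fun y => f (x2, y))); try (apply (cont_on_vb _ x1 x2 y1 y2); auto; tauto).
  ring. all: try assumption.
Qed.

Lemma Rect_minus f g : ContBd f x1 x2 y1 y2 -> ContBd g x1 x2 y1 y2 ->
  Rect (fun z => f z - g z)%C x1 x2 y1 y2 = (Rect f x1 x2 y1 y2 - Rect g x1 x2 y1 y2)%C.
Proof.
  intros Hf Hg.
  assert (E : (fun z => f z - g z)%C = (fun z => f z + RtoC (-1) * g z)%C).
  { apply functional_extensionality; intros z. unfold RtoC.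
    apply injective_projections; destruct (f z), (g z); simpl; ring. }
  rewrite E, Rect_plus, Rect_cmul; auto. unfold RtoC.
  apply injective_projections; destruct (Rect f x1 x2 y1 y2), (Rect g x1 x2 y1 y2); simpl; ring.
  apply ContBd_cmul; auto.
Qed.

Lemma Rect_ext f g : (forall z, inRect x1 x2 y1 y2 z ->
   (Re z = x1 \/ Re z = x2 \/ Im z = y1 \/ Im z = y2) -> f z = g z) ->
  Rect f x1 x2 y1 y2 = Rect g x1 x2 y1 y2.
Proof.
  intros H. unfold Rect.
  rewrite (CInt_ext (fun x => f (x, y1)) (fun x => g (x, y1))); auto.
  rewrite (CInt_ext (fun x => f (x, y2)) (fun x => g (x, y2))); auto.
  rewrite (CInt_ext (fun y => f (x1, y)) (fun y => g (x1, y))); auto.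
  rewrite (CInt_ext (fun y => f (x2, y)) (fun y => g (x2, y))); auto.
  all: intros t Ht; apply H; unfold inRect; simpl; lra.
Qed.

Lemma Rect_bound f B : ContBd f x1 x2 y1 y2 ->
  (forall z, inRect x1 x2 y1 y2 z -> (Re z = x1 \/ Re z = x2 \/ Im z = y1 \/ Im z = y2) -> Cmod (f z) <= B) ->
  Cmod (Rect f x1 x2 y1 y2) <= 2 * ((x2 - x1) + (y2 - y1)) * B.
Proof.
  intros Hf HB. unfold Rect.
  assert (B1 : Cmod (CInt (fun x => f (x, y1)) x1 x2) <= (x2 - x1) * B).
  { apply CInt_bound; auto. apply (cont_on_hb _ x1 x2 y1 y2); auto; try tauto. intros t Ht; apply HB; unfold inRect; simpl; lra. }
  assert (B2 : Cmod (CInt (fun x => f (x, y2)) x1 x2) <= (x2 - x1) * B).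
  { apply CInt_bound; auto. apply (cont_on_hb _ x1 x2 y1 y2); auto; try tauto. intros t Ht; apply HB; unfold inRect; simpl; lra. }
  assert (B3 : Cmod (CInt (fun y => f (x1, y)) y1 y2) <= (y2 - y1) * B).
  { apply CInt_bound; auto. apply (cont_on_vb _ x1 x2 y1 y2); auto; try tauto. intros t Ht; apply HB; unfold inRect; simpl; lra. }
  assert (B4 : Cmod (CInt (fun y => f (x2, y)) y1 y2) <= (y2 - y1) * B).
  { apply CInt_bound; auto. apply (cont_on_vb _ x1 x2 y1 y2); auto; try tauto. intros t Ht; apply HB; unfold inRect; simpl; lra. }
  set (a := CInt (fun x => f (x, y1)) x1 x2) in *.
  set (b := CInt (fun y => f (x2, y)) y1 y2) in *.
  set (c := CInt (fun x => f (x, y2)) x1 x2) in *.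
  set (d := CInt (fun y => f (x1, y)) y1 y2) in *.
  assert (HCi : Cmod Ci = 1).
  { unfold Ci, Cmod; simpl. replace (0 * (0 * 1) + 1 * (1 * 1)) with 1 by ring. apply sqrt_1. }
  replace (a + Ci * b - c - Ci * d)%C with (a + (Ci * b) + (- c) + (- (Ci * d)))%C by ring.
  eapply Rle_trans. apply Cmod_triangle. rewrite Cmod_opp.
  eapply Rle_trans. apply Rplus_le_compat_r. apply Cmod_triangle. rewrite Cmod_opp.
  eapply Rle_trans. apply Rplus_le_compat_r. apply Rplus_le_compat_r. apply Cmod_triangle.
  rewrite !Cmod_mult, HCi. lra.
Qed.

End RectLemmas.

Lemma Rect_splitX f x1 xm x2 y1 y2 : x1 <= xm -> xm <= x2 -> y1 <= y2 -> ContRect f x1 x2 y1 y2 ->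
  Rect f x1 x2 y1 y2 = (Rect f x1 xm y1 y2 + Rect f xm x2 y1 y2)%C.
Proof.
  intros h1 h2 h3 Hf. unfold Rect.
  rewrite <- (CInt_chasles (fun x => f (x, y1)) x1 xm x2); auto. 2:{ eapply cont_on_h; eauto; lra. }
  rewrite <- (CInt_chasles (fun x => f (x, y2)) x1 xm x2); auto. 2:{ eapply cont_on_h; eauto; lra. }
  ring. all: try assumption.
Qed.

Lemma Rect_splitY f x1 x2 y1 ym y2 : x1 <= x2 -> y1 <= ym -> ym <= y2 -> ContRect f x1 x2 y1 y2 ->
  Rect f x1 x2 y1 y2 = (Rect f x1 x2 y1 ym + Rect f x1 x2 ym y2)%C.
Proof.
  intros h1 h2 h3 Hf. unfold Rect.
  rewrite <- (CInt_chasles (fun y => f (x1, y)) y1 ym y2); auto. 2:{ eapply cont_on_v; eauto; lra. }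
  rewrite <- (CInt_chasles (fun y => f (x2, y)) y1 ym y2); auto. 2:{ eapply cont_on_v; eauto; lra. }
  ring. all: try assumption.
Qed.

Lemma holAt_hside F x y l : holAt F (x, y) l -> derR (fun s => F (s, y)) x l.
Proof.
  intros H e He. destruct (H e He) as [d [Hd H']]. exists d; split; auto.
  intros s Hs. specialize (H' (s, y)). rewrite Cmod_hdiff in H'. specialize (H' Hs).
  replace ((s, y) - (x, y))%C with (RtoC (s - x)) in H'.
  2:{ unfold RtoC; apply injective_projections; simpl; ring. }
  rewrite Cmult_comm. exact H'.
Qed.

Lemma holAt_vside F x y l : holAt F (x, y) l -> derR (fun s => F (x, s)) y (Ci * l)%C.
Proof.
  intros H e He. destruct (H e He) as [d [Hd H']]. exists d; split; auto.
  intros s Hs. specialize (H' (x, s)). rewrite Cmod_vdiff in H'. specialize (H' Hs).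
  replace ((x, s) - (x, y))%C with (Ci * RtoC (s - y))%C in H'.
  replace (RtoC (s - y) * (Ci * l))%C with (l * (Ci * RtoC (s - y)))%C by ring. auto.
  unfold RtoC, Ci; apply injective_projections; simpl; ring.
Qed.

Lemma Rect_prim F f x1 x2 y1 y2 : x1 <= x2 -> y1 <= y2 ->
  (forall z, inRect x1 x2 y1 y2 z -> holAt F z (f z)) -> ContRect f x1 x2 y1 y2 ->
  Rect f x1 x2 y1 y2 = RtoC 0.
Proof.
  intros h1 h2 HF Hf. unfold Rect.
  rewrite (CInt_FTC (fun x => F (x, y1)) (fun x => f (x, y1))); auto.
  2:{ intros t Ht. apply holAt_hside. apply HF. unfold inRect; simpl; lra. }
  2:{ eapply cont_on_h; eauto; lra. }
  rewrite (CInt_FTC (fun x => F (x, y2)) (fun x => f (x, y2))); auto.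
  2:{ intros t Ht. apply holAt_hside. apply HF. unfold inRect; simpl; lra. }
  2:{ eapply cont_on_h; eauto; lra. }
  rewrite <- (CInt_cmul Ci (fun y => f (x1, y))); auto. 2:{ eapply cont_on_v; eauto; lra. }
  rewrite <- (CInt_cmul Ci (fun y => f (x2, y))); auto. 2:{ eapply cont_on_v; eauto; lra. }
  rewrite (CInt_FTC (fun y => F (x1, y)) (fun y => Ci * f (x1, y))%C); auto.
  2:{ intros t Ht. apply holAt_vside. apply HF. unfold inRect; simpl; lra. }
  2:{ apply cont_on_cmul. eapply cont_on_v; eauto; lra. }
  rewrite (CInt_FTC (fun y => F (x2, y)) (fun y => Ci * f (x2, y))%C); auto.
  2:{ intros t Ht. apply holAt_vside. apply HF. unfold inRect; simpl; lra. }
  2:{ apply cont_on_cmul. eapply cont_on_v; eauto; lra. }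
  ring. all: try assumption.
Qed.

Lemma contC_affine (A B z : C) : contC (fun u => A + B * u)%C z.
Proof. apply contC_plus. apply contC_const. apply contC_mult. apply contC_const. apply contC_id. Qed.

Lemma Rect_affine A B x1 x2 y1 y2 : x1 <= x2 -> y1 <= y2 ->
  Rect (fun u => A + B * u)%C x1 x2 y1 y2 = RtoC 0.
Proof.
  intros h1 h2. apply (Rect_prim (fun u => A * u + B * u * u / RtoC 2)%C); auto.
  2:{ intros z _. apply contC_affine. }
  intros z _ e He. exists (e / (Cmod B + 1)). split.
  apply Rdiv_lt_0_compat; auto. generalize (Cmod_ge_0 B); lra.
  intros u Hu.
  replace (A * u + B * u * u / RtoC 2 - (A * z + B * z * z / RtoC 2) - (A + B * z) * (u - z))%C
    with ((B / RtoC 2) * (u - z) * (u - z))%C.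
  2:{ field; intro E; injection E; lra. }
  rewrite !Cmod_mult, Cmod_div. 2:{ intro E. injection E. lra. }
  rewrite Cmod_R, Rabs_pos_eq by lra.
  assert (0 <= Cmod B) by apply Cmod_ge_0. assert (0 <= Cmod (u - z)) by apply Cmod_ge_0.
  apply Rmult_le_compat_r; auto.
  apply Rle_trans with (Cmod B * (e / (Cmod B + 1))).
  2:{ apply Rle_trans with ((Cmod B + 1) * (e / (Cmod B + 1))).
      apply Rmult_le_compat_r. apply Rlt_le, Rdiv_lt_0_compat; lra. lra. right; field; lra. }
  replace (Cmod B / 2 * Cmod (u - z)) with (Cmod B * (Cmod (u - z) / 2)) by field.
  apply Rmult_le_compat_l; auto. apply Rle_trans with (Cmod (u - z)). lra. lra.
Qed.

Definition RQ := ((R * R) * (R * R))%type.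
Definition qa1 (q : RQ) := fst (fst q).
Definition qa2 (q : RQ) := snd (fst q).
Definition qb1 (q : RQ) := fst (snd q).
Definition qb2 (q : RQ) := snd (snd q).
Definition RectQ f (q : RQ) := Rect f (qa1 q) (qa2 q) (qb1 q) (qb2 q).

Definition quad1 (q : RQ) : RQ := ((qa1 q, (qa1 q + qa2 q)/2), (qb1 q, (qb1 q + qb2 q)/2)).
Definition quad2 (q : RQ) : RQ := (((qa1 q + qa2 q)/2, qa2 q), (qb1 q, (qb1 q + qb2 q)/2)).
Definition quad3 (q : RQ) : RQ := ((qa1 q, (qa1 q + qa2 q)/2), ((qb1 q + qb2 q)/2, qb2 q)).
Definition quad4 (q : RQ) : RQ := (((qa1 q + qa2 q)/2, qa2 q), ((qb1 q + qb2 q)/2, qb2 q)).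

Definition pick2 f (a b : RQ) : RQ :=
  if Rle_dec (Cmod (RectQ f a)) (Cmod (RectQ f b)) then b else a.

Definition stepQ f (q : RQ) : RQ := pick2 f (pick2 f (quad1 q) (quad2 q)) (pick2 f (quad3 q) (quad4 q)).

Lemma pick2_ge f a b : Cmod (RectQ f a) <= Cmod (RectQ f (pick2 f a b)) /\
  Cmod (RectQ f b) <= Cmod (RectQ f (pick2 f a b)).
Proof. unfold pick2. destruct (Rle_dec _ _); lra. Qed.

Lemma pick2_cases f a b : pick2 f a b = a \/ pick2 f a b = b.
Proof. unfold pick2. destruct (Rle_dec _ _); auto. Qed.

Lemma RectQ_quads f q : qa1 q <= qa2 q -> qb1 q <= qb2 q -> ContRect f (qa1 q) (qa2 q) (qb1 q) (qb2 q) ->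
  RectQ f q = (RectQ f (quad1 q) + RectQ f (quad2 q) + RectQ f (quad3 q) + RectQ f (quad4 q))%C.
Proof.
  intros h1 h2 Hf. unfold RectQ, quad1, quad2, quad3, quad4, qa1, qa2, qb1, qb2 in *; simpl.
  destruct q as [[a1 a2] [b1 b2]]; simpl in *.
  rewrite (Rect_splitX f a1 ((a1 + a2)/2) a2); try lra; auto.
  rewrite (Rect_splitY f a1 ((a1 + a2)/2) b1 ((b1+b2)/2) b2); try lra.
  2:{ eapply ContRect_sub; eauto; lra. }
  rewrite (Rect_splitY f ((a1 + a2)/2) a2 b1 ((b1+b2)/2) b2); try lra.
  2:{ eapply ContRect_sub; eauto; lra. }
  ring.
Qed.

Lemma stepQ_bound f q : qa1 q <= qa2 q -> qb1 q <= qb2 q -> ContRect f (qa1 q) (qa2 q) (qb1 q) (qb2 q) ->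
  Cmod (RectQ f q) <= 4 * Cmod (RectQ f (stepQ f q)).
Proof.
  intros h1 h2 Hf. rewrite RectQ_quads; auto.
  unfold stepQ.
  destruct (pick2_ge f (quad1 q) (quad2 q)) as [A1 A2].
  destruct (pick2_ge f (quad3 q) (quad4 q)) as [A3 A4].
  destruct (pick2_ge f (pick2 f (quad1 q) (quad2 q)) (pick2 f (quad3 q) (quad4 q))) as [B1 B2].
  eapply Rle_trans. apply Cmod_triangle.
  eapply Rle_trans. apply Rplus_le_compat_r. apply Cmod_triangle.
  eapply Rle_trans. apply Rplus_le_compat_r. apply Rplus_le_compat_r. apply Cmod_triangle.
  lra.
Qed.

Lemma stepQ_shape f q : qa1 q <= qa2 q -> qb1 q <= qb2 q ->
  let q' := stepQ f q in
  qa1 q <= qa1 q' /\ qa2 q' <= qa2 q /\ qa2 q' - qa1 q' = (qa2 q - qa1 q) / 2 /\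
  qb1 q <= qb1 q' /\ qb2 q' <= qb2 q /\ qb2 q' - qb1 q' = (qb2 q - qb1 q) / 2.
Proof.
  intros h1 h2 q'.
  assert (H : q' = quad1 q \/ q' = quad2 q \/ q' = quad3 q \/ q' = quad4 q).
  { unfold q', stepQ.
    destruct (pick2_cases f (pick2 f (quad1 q) (quad2 q)) (pick2 f (quad3 q) (quad4 q))) as [E|E]; rewrite E.
    - destruct (pick2_cases f (quad1 q) (quad2 q)) as [E'|E']; rewrite E'; auto.
    - destruct (pick2_cases f (quad3 q) (quad4 q)) as [E'|E']; rewrite E'; auto. }
  destruct H as [H|[H|[H|H]]]; rewrite H; unfold quad1, quad2, quad3, quad4, qa1, qa2, qb1, qb2 in *;
  simpl; lra.
Qed.

Fixpoint seqQ f (q : RQ) (n : nat) : RQ :=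
  match n with O => q | S n => stepQ f (seqQ f q n) end.

Section Goursat.
Variable f : C -> C.
Variable q : RQ.
Hypothesis (h1 : qa1 q <= qa2 q) (h2 : qb1 q <= qb2 q).

Lemma seqQ_shape n :
  qa1 q <= qa1 (seqQ f q n) /\ qa2 (seqQ f q n) <= qa2 q /\
  qa2 (seqQ f q n) - qa1 (seqQ f q n) = (qa2 q - qa1 q) * (/2) ^ n /\
  qb1 q <= qb1 (seqQ f q n) /\ qb2 (seqQ f q n) <= qb2 q /\
  qb2 (seqQ f q n) - qb1 (seqQ f q n) = (qb2 q - qb1 q) * (/2) ^ n.
Proof.
  induction n; simpl. lra.
  destruct IHn as (A1 & A2 & A3 & A4 & A5 & A6).
  assert (P1 : 0 <= (qa2 q - qa1 q) * (/2) ^ n) by (apply Rmult_le_pos; [lra| apply pow_le; lra]).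
  assert (P2 : 0 <= (qb2 q - qb1 q) * (/2) ^ n) by (apply Rmult_le_pos; [lra| apply pow_le; lra]).
  assert (C1 : qa1 (seqQ f q n) <= qa2 (seqQ f q n)) by lra.
  assert (C2 : qb1 (seqQ f q n) <= qb2 (seqQ f q n)) by lra.
  pose proof (stepQ_shape f (seqQ f q n) C1 C2) as B. cbv zeta in B.
  destruct B as (B1 & B2 & B3 & B4 & B5 & B6).
  rewrite B3, B6, A3, A6. repeat split; try lra.
Qed.

Lemma seqQ_mono n : qa1 (seqQ f q n) <= qa1 (seqQ f q (S n)) /\ qa2 (seqQ f q (S n)) <= qa2 (seqQ f q n) /\
  qb1 (seqQ f q n) <= qb1 (seqQ f q (S n)) /\ qb2 (seqQ f q (S n)) <= qb2 (seqQ f q n).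
Proof.
  destruct (seqQ_shape n) as (A1 & A2 & A3 & A4 & A5 & A6).
  assert (P1 : 0 <= (qa2 q - qa1 q) * (/2) ^ n) by (apply Rmult_le_pos; [lra| apply pow_le; lra]).
  assert (P2 : 0 <= (qb2 q - qb1 q) * (/2) ^ n) by (apply Rmult_le_pos; [lra| apply pow_le; lra]).
  assert (C1 : qa1 (seqQ f q n) <= qa2 (seqQ f q n)) by lra.
  assert (C2 : qb1 (seqQ f q n) <= qb2 (seqQ f q n)) by lra.
  pose proof (stepQ_shape f (seqQ f q n) C1 C2) as B. cbv zeta in B.
  destruct B as (B1 & B2 & B3 & B4 & B5 & B6).
  simpl. repeat split; lra.
Qed.

Lemma seqQ_nest n k : qa1 (seqQ f q n) <= qa1 (seqQ f q (n + k)) /\ qa2 (seqQ f q (n + k)) <= qa2 (seqQ f q n) /\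
  qb1 (seqQ f q n) <= qb1 (seqQ f q (n + k)) /\ qb2 (seqQ f q (n + k)) <= qb2 (seqQ f q n).
Proof.
  induction k. rewrite Nat.add_0_r. lra.
  rewrite Nat.add_succ_r. destruct (seqQ_mono (n + k)). lra.
Qed.

Lemma seqQ_cross n m : qa1 (seqQ f q m) <= qa2 (seqQ f q n) /\ qb1 (seqQ f q m) <= qb2 (seqQ f q n).
Proof.
  destruct (Nat.le_ge_cases n m) as [H|H].
  - destruct (seqQ_shape m) as (A1 & A2 & A3 & A4 & A5 & A6).
    assert (P1 : 0 <= (qa2 q - qa1 q) * (/2) ^ m) by (apply Rmult_le_pos; [lra| apply pow_le; lra]).
    assert (P2 : 0 <= (qb2 q - qb1 q) * (/2) ^ m) by (apply Rmult_le_pos; [lra| apply pow_le; lra]).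
    replace m with (n + (m - n))%nat in * by lia.
    destruct (seqQ_nest n (m - n)). lra.
  - destruct (seqQ_shape n) as (A1 & A2 & A3 & A4 & A5 & A6).
    assert (P1 : 0 <= (qa2 q - qa1 q) * (/2) ^ n) by (apply Rmult_le_pos; [lra| apply pow_le; lra]).
    assert (P2 : 0 <= (qb2 q - qb1 q) * (/2) ^ n) by (apply Rmult_le_pos; [lra| apply pow_le; lra]).
    replace n with (m + (n - m))%nat in * by lia.
    destruct (seqQ_nest m (n - m)). lra.
Qed.

Hypothesis Hhol : forall z, inRect (qa1 q) (qa2 q) (qb1 q) (qb2 q) z -> hol f z.

Lemma ContRect_q : ContRect f (qa1 q) (qa2 q) (qb1 q) (qb2 q).
Proof. intros z Hz. destruct (Hhol z Hz) as [l Hl]. eapply holAt_contC; eauto. Qed.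

Lemma seqQ_cont n : ContRect f (qa1 (seqQ f q n)) (qa2 (seqQ f q n)) (qb1 (seqQ f q n)) (qb2 (seqQ f q n)).
Proof.
  destruct (seqQ_shape n) as (A1 & A2 & A3 & A4 & A5 & A6).
  eapply ContRect_sub. apply ContRect_q. all: lra.
Qed.

Lemma seqQ_val n : Cmod (RectQ f q) <= 4 ^ n * Cmod (RectQ f (seqQ f q n)).
Proof.
  induction n; simpl. lra.
  destruct (seqQ_shape n) as (A1 & A2 & A3 & A4 & A5 & A6).
  assert (P1 : 0 <= (qa2 q - qa1 q) * (/2) ^ n) by (apply Rmult_le_pos; [lra| apply pow_le; lra]).
  assert (P2 : 0 <= (qb2 q - qb1 q) * (/2) ^ n) by (apply Rmult_le_pos; [lra| apply pow_le; lra]).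
  assert (B := stepQ_bound f (seqQ f q n) ltac:(lra) ltac:(lra) (seqQ_cont n)).
  assert (0 <= 4 ^ n) by (apply pow_le; lra).
  eapply Rle_trans. apply IHn. rewrite (Rmult_comm 4 (4 ^ n)), Rmult_assoc. apply Rmult_le_compat_l; auto.
Qed.

Lemma goursat_aux : RectQ f q = RtoC 0.
Proof.
  set (E1 := fun x => exists n, x = qa1 (seqQ f q n)).
  set (E2 := fun x => exists n, x = qb1 (seqQ f q n)).
  destruct (completeness E1) as [px Hpx].
  { exists (qa2 q). intros x [n ->]. destruct (seqQ_cross 0 n) as [A _]. simpl in A. auto. }
  { exists (qa1 q). exists O. reflexivity. }
  destruct (completeness E2) as [py Hpy].
  { exists (qb2 q). intros x [n ->]. destruct (seqQ_cross 0 n) as [_ A]. simpl in A. auto. }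
  { exists (qb1 q). exists O. reflexivity. }
  assert (Hp : forall n, qa1 (seqQ f q n) <= px <= qa2 (seqQ f q n) /\ qb1 (seqQ f q n) <= py <= qb2 (seqQ f q n)).
  { intros n. destruct Hpx as [Ux Lx]. destruct Hpy as [Uy Ly]. repeat split.
    - apply Ux. exists n; auto.
    - apply Lx. intros x [m ->]. apply seqQ_cross.
    - apply Uy. exists n; auto.
    - apply Ly. intros x [m ->]. apply seqQ_cross. }
  assert (Hin : inRect (qa1 q) (qa2 q) (qb1 q) (qb2 q) (px, py)).
  { destruct (Hp O) as [[A1 A2] [A3 A4]]. simpl in *. split; simpl; lra. }
  destruct (Hhol _ Hin) as [l Hl].
  set (S := (qa2 q - qa1 q) + (qb2 q - qb1 q)).
  assert (HS : 0 <= S) by (unfold S; lra).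
  assert (Key : forall eps, 0 < eps -> Cmod (RectQ f q) <= 2 * eps * S * S).
  { intros eps Heps. destruct (Hl eps Heps) as [d [Hd Hd']].
    destruct (pow_lt_1_zero (/2) ltac:(rewrite Rabs_pos_eq; lra) (d / (S + 1))) as [N HN].
    { apply Rdiv_lt_0_compat; lra. }
    specialize (HN N (le_n N)). rewrite Rabs_pos_eq in HN by (apply pow_le; lra).
    set (r := (/2) ^ N) in *.
    assert (Hr : 0 <= r) by (apply pow_le; lra).
    assert (HSr : S * r < d).
    { apply Rle_lt_trans with ((S + 1) * r). apply Rmult_le_compat_r; lra.
      apply Rlt_le_trans with ((S+1) * (d / (S + 1))). apply Rmult_lt_compat_l; lra. right; field; lra. }
    destruct (seqQ_shape N) as (A1 & A2 & A3 & A4 & A5 & A6).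
    fold r in A3, A6.
    set (qn := seqQ f q N) in *.
    assert (HqC := seqQ_cont N). fold qn in HqC.
    assert (Wa : qa1 qn <= qa2 qn) by (assert (0 <= (qa2 q - qa1 q) * r) by (apply Rmult_le_pos; lra); lra).
    assert (Wb : qb1 qn <= qb2 qn) by (assert (0 <= (qb2 q - qb1 q) * r) by (apply Rmult_le_pos; lra); lra).
    set (p := (px, py)).
    set (A := (f p - l * p)%C).
    assert (E : RectQ f qn = Rect (fun u => f u - (A + l * u))%C (qa1 qn) (qa2 qn) (qb1 qn) (qb2 qn)).
    { unfold RectQ. rewrite Rect_minus; try lra; try (apply ContRect_Bd; auto).
      rewrite Rect_affine; try lra. ring. intros z _. apply contC_affine. }
    assert (Hb : Cmod (RectQ f qn) <= 2 * ((qa2 qn - qa1 qn) + (qb2 qn - qb1 qn)) * (eps * (S * r))).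
    { rewrite E. apply Rect_bound; try lra.
      - apply ContRect_Bd. apply ContRect_minus; auto. intros z _. apply contC_affine.
      - intros z [Hzx Hzy] _.
        destruct (Hp N) as [[B1 B2] [B3 B4]]. fold qn in B1, B2, B3, B4.
        assert (Hzp : Cmod (z - p) <= S * r).
        { eapply Rle_trans. apply Cmod_le_re_im. unfold p. destruct z as [zx zy]; simpl in *.
          replace (S * r) with ((qa2 q - qa1 q) * r + (qb2 q - qb1 q) * r) by (unfold S; ring).
          apply Rplus_le_compat; apply Rabs_le; lra. }
        replace (f z - (A + l * z))%C with (f z - f p - l * (z - p))%C by (unfold A; ring).
        apply Rle_trans with (eps * Cmod (z - p)). apply Hd'. unfold p in *; lra. apply Rmult_le_compat_l; lra. }
    assert (Hw : (qa2 qn - qa1 qn) + (qb2 qn - qb1 qn) = S * r) by (unfold S; lra).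
    rewrite Hw in Hb.
    assert (H4 := seqQ_val N). fold qn in H4.
    assert (E4 : 4 ^ N * (r * r) = 1).
    { unfold r. rewrite <- Rpow_mult_distr, <- Rpow_mult_distr.
      replace (4 * (/ 2 * / 2)) with 1 by field. apply pow1. }
    eapply Rle_trans. apply H4.
    assert (0 <= 4 ^ N) by (apply pow_le; lra).
    eapply Rle_trans. apply Rmult_le_compat_l. auto. apply Hb.
    replace (4 ^ N * (2 * (S * r) * (eps * (S * r)))) with (2 * eps * S * S * (4 ^ N * (r * r))) by ring.
    rewrite E4. lra. }
  destruct (Req_dec (Cmod (RectQ f q)) 0) as [Z|Z].
  { apply Cmod_eq_0 in Z. rewrite Z. reflexivity. }
  exfalso. assert (Hc : 0 < Cmod (RectQ f q)) by (generalize (Cmod_ge_0 (RectQ f q)); lra).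
  specialize (Key (Cmod (RectQ f q) / (4 * (S * S + 1)))).
  assert (0 <= S * S) by nra.
  assert (Hpos : 0 < Cmod (RectQ f q) / (4 * (S * S + 1))) by (apply Rdiv_lt_0_compat; lra).
  specialize (Key Hpos).
  assert (2 * (Cmod (RectQ f q) / (4 * (S * S + 1))) * S * S < Cmod (RectQ f q)).
  { replace (2 * (Cmod (RectQ f q) / (4 * (S * S + 1))) * S * S) with
      (Cmod (RectQ f q) * (S * S / (2 * (S * S + 1)))) by (field; lra).
    rewrite <- (Rmult_1_r (Cmod (RectQ f q))) at 2. apply Rmult_lt_compat_l; auto.
    apply Rmult_lt_reg_r with (2 * (S * S + 1)). lra.
    field_simplify; lra. }
  lra.
Qed.
End Goursat.

Lemma goursat f x1 x2 y1 y2 : x1 <= x2 -> y1 <= y2 ->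
  (forall z, inRect x1 x2 y1 y2 z -> hol f z) -> Rect f x1 x2 y1 y2 = RtoC 0.
Proof.
  intros h1 h2 H. apply (goursat_aux f ((x1, x2), (y1, y2))); auto.
Qed.

Lemma holAt_ext f g z l r : 0 < r -> (forall u, Cmod (u - z) < r -> f u = g u) ->
  holAt f z l -> holAt g z l.
Proof.
  intros Hr E H e He. destruct (H e He) as [d [Hd H']]. exists (Rmin d r). split. apply Rmin_pos; auto.
  intros u Hu. assert (Hu1 : Cmod (u - z) < d) by (eapply Rlt_le_trans; [apply Hu| apply Rmin_l]).
  assert (Hu2 : Cmod (u - z) < r) by (eapply Rlt_le_trans; [apply Hu| apply Rmin_r]).
  rewrite <- (E u Hu2), <- (E z). auto. replace (z - z)%C with (RtoC 0) by ring. rewrite Cmod_0; auto.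
Qed.

Lemma holAt_const c z : holAt (fun _ => c) z (RtoC 0).
Proof. intros e He. exists 1. split. lra. intros u _.
  replace (c - c - RtoC 0 * (u - z))%C with (RtoC 0) by ring. rewrite Cmod_0.
  apply Rmult_le_pos. lra. apply Cmod_ge_0. Qed.

Lemma holAt_minus_const f z l c : holAt f z l -> holAt (fun u => f u - c)%C z l.
Proof. intros H e He. destruct (H e He) as [d [Hd H']]. exists d; split; auto.
  intros u Hu. replace (f u - c - (f z - c) - l * (u - z))%C with (f u - f z - l * (u - z))%C by ring. auto. Qed.

Lemma holAt_mult f g z a b : holAt f z a -> holAt g z b ->
  holAt (fun u => f u * g u)%C z (a * g z + f z * b)%C.
Proof.
  intros Hf Hg e He.
  set (A := Cmod a). set (F := Cmod (f z)). set (B := Cmod (g z)).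
  assert (HA : 0 <= A) by apply Cmod_ge_0. assert (HF : 0 <= F) by apply Cmod_ge_0.
  assert (HB : 0 <= B) by apply Cmod_ge_0.
  set (e1 := e / (3 * (B + 1))). set (e2 := Rmin 1 (e / (3 * (A + 1)))). set (e3 := e / (3 * (F + 1))).
  assert (He1 : 0 < e1) by (apply Rdiv_lt_0_compat; lra).
  assert (He2 : 0 < e2) by (apply Rmin_pos; [lra| apply Rdiv_lt_0_compat; lra]).
  assert (He3 : 0 < e3) by (apply Rdiv_lt_0_compat; lra).
  destruct (Hf e1 He1) as [d1 [Hd1 H1]].
  destruct (holAt_contC g z b Hg e2 He2) as [d2 [Hd2 H2]].
  destruct (Hg e3 He3) as [d3 [Hd3 H3]].
  exists (Rmin d1 (Rmin d2 d3)). split. repeat apply Rmin_pos; auto.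
  intros u Hu.
  assert (Hu1 : Cmod (u - z) < d1) by (eapply Rlt_le_trans; [apply Hu| apply Rmin_l]).
  assert (Hu2 : Cmod (u - z) < d2) by (eapply Rlt_le_trans; [apply Hu| eapply Rle_trans; [apply Rmin_r| apply Rmin_l]]).
  assert (Hu3 : Cmod (u - z) < d3) by (eapply Rlt_le_trans; [apply Hu| eapply Rle_trans; [apply Rmin_r| apply Rmin_r]]).
  specialize (H1 u Hu1). specialize (H2 u Hu2). specialize (H3 u Hu3).
  replace (f u * g u - f z * g z - (a * g z + f z * b) * (u - z))%C with
    ((f u - f z - a * (u - z)) * g u + a * (u - z) * (g u - g z) + f z * (g u - g z - b * (u - z)))%C by ring.
  set (D := Cmod (u - z)) in *. assert (HD : 0 <= D) by apply Cmod_ge_0.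
  assert (Hgu : Cmod (g u) <= B + 1).
  { generalize (Cmod_tri3 (g u) (g z) 0). replace (g u - 0)%C with (g u) by ring.
    replace (g z - 0)%C with (g z) by ring. fold B. generalize (Rmin_l 1 (e / (3 * (A + 1)))). fold e2. lra. }
  assert (Hg2 : Cmod (g u - g z) <= e / (3 * (A + 1))).
  { left. eapply Rlt_le_trans. apply H2. apply Rmin_r. }
  eapply Rle_trans. apply Cmod_triangle. eapply Rle_trans. apply Rplus_le_compat_r. apply Cmod_triangle.
  rewrite !Cmod_mult. fold A F D.
  assert (T1 : Cmod (f u - f z - a * (u - z)) * Cmod (g u) <= e1 * D * (B + 1)).
  { apply Rmult_le_compat; try apply Cmod_ge_0; auto. }
  assert (T2 : A * D * Cmod (g u - g z) <= A * D * (e / (3 * (A + 1)))).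
  { apply Rmult_le_compat_l; auto. apply Rmult_le_pos; auto. }
  assert (T3 : F * Cmod (g u - g z - b * (u - z)) <= F * (e3 * D)).
  { apply Rmult_le_compat_l; auto. }
  assert (E1 : e1 * D * (B + 1) = e / 3 * D) by (unfold e1; field; lra).
  assert (E2 : A * D * (e / (3 * (A + 1))) <= e / 3 * D).
  { replace (A * D * (e / (3 * (A + 1)))) with (e / 3 * D * (A / (A + 1))) by (field; lra).
    rewrite <- (Rmult_1_r (e / 3 * D)) at 2. apply Rmult_le_compat_l. apply Rmult_le_pos; lra.
    apply Rmult_le_reg_r with (A + 1). lra. field_simplify; lra. }
  assert (E3 : F * (e3 * D) <= e / 3 * D).
  { replace (F * (e3 * D)) with (e / 3 * D * (F / (F + 1))) by (unfold e3; field; lra).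
    rewrite <- (Rmult_1_r (e / 3 * D)) at 2. apply Rmult_le_compat_l. apply Rmult_le_pos; lra.
    apply Rmult_le_reg_r with (F + 1). lra. field_simplify; lra. }
  lra.
Qed.

Lemma holAt_invlin z w : z <> w -> holAt (fun u => / (u - w))%C z (- / ((z - w) * (z - w)))%C.
Proof.
  intros Hzw e He. assert (Hzw' : (z - w)%C <> RtoC 0).
  { intro E. apply Hzw. replace z with ((z - w) + w)%C by ring. rewrite E. ring. }
  set (m := Cmod (z - w)). assert (Hm : 0 < m) by (apply Cmod_gt_0; auto).
  exists (Rmin (m / 2) (e * m * m * m / 2)). split. apply Rmin_pos. lra.
  apply Rdiv_lt_0_compat; [|lra]. repeat apply Rmult_lt_0_compat; lra.
  intros u Hu.
  assert (Hu1 : Cmod (u - z) < m / 2) by (eapply Rlt_le_trans; [apply Hu| apply Rmin_l]).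
  assert (Hu2 : Cmod (u - z) < e * m * m * m / 2) by (eapply Rlt_le_trans; [apply Hu| apply Rmin_r]).
  assert (Huw : m / 2 < Cmod (u - w)).
  { generalize (Cmod_tri3 (z) u w). rewrite (Cmod_minus_sym z u). fold m. lra. }
  assert (Huw' : (u - w)%C <> RtoC 0). { intro E. rewrite E, Cmod_0 in Huw. lra. }
  replace (/ (u - w) - / (z - w) - - / ((z - w) * (z - w)) * (u - z))%C
    with ((u - z) * (u - z) / ((u - w) * (z - w) * (z - w)))%C.
  2:{ field. split; auto. }
  rewrite Cmod_div. 2:{ repeat apply Cmult_neq_0; auto. }
  rewrite !Cmod_mult. fold m. set (D := Cmod (u - z)) in *. assert (HD : 0 <= D) by apply Cmod_ge_0.
  set (M := Cmod (u - w)) in *.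
  apply Rmult_le_reg_r with (M * m * m). repeat apply Rmult_lt_0_compat; lra.
  replace (D * D / (M * m * m) * (M * m * m)) with (D * D) by (field; split; lra).
  apply Rle_trans with (D * (e * m * m * m / 2)). apply Rmult_le_compat_l; lra.
  replace (D * (e * m * m * m / 2)) with (e * D * (m / 2 * m * m)) by field.
  apply Rmult_le_compat_l. apply Rmult_le_pos; lra.
  apply Rmult_le_compat_r. lra. apply Rmult_le_compat_r; lra.
Qed.

Lemma goursat_exc f x1 x2 y1 y2 w : x1 < Re w < x2 -> y1 < Im w < y2 -> contC f w ->
  (forall z, inRect x1 x2 y1 y2 z -> z <> w -> hol f z) -> Rect f x1 x2 y1 y2 = RtoC 0.
Proof.
  intros Hwx Hwy Hc Hh.
  assert (HC : ContRect f x1 x2 y1 y2).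
  { intros z Hz. destruct (classic (z = w)) as [E|E]. subst; auto.
    destruct (Hh z Hz E) as [l Hl]. eapply holAt_contC; eauto. }
  destruct w as [w1 w2]; simpl in *.
  apply Cmod_eq_0. apply Rle_antisym. 2: apply Cmod_ge_0.
  apply Rnot_lt_le. intro Hpos.
  set (eps := Cmod (Rect f x1 x2 y1 y2)) in *.
  destruct (Hc 1 Rlt_0_1) as [d1 [Hd1 H1]].
  set (K := Cmod (f (w1, w2)) + 1). assert (HK : 0 < K) by (generalize (Cmod_ge_0 (f (w1, w2))); unfold K; lra).
  set (t := Rmin (Rmin (d1 / 4) (eps / (16 * K))) (Rmin (Rmin ((w1 - x1)/2) ((x2 - w1)/2)) (Rmin ((w2 - y1)/2) ((y2 - w2)/2)))).
  assert (Ht0 : 0 < t).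
  { unfold t. repeat apply Rmin_pos; try lra. apply Rdiv_lt_0_compat; lra. }
  assert (Ht1 : t <= d1 / 4) by (unfold t; eapply Rle_trans; [apply Rmin_l| apply Rmin_l]).
  assert (Ht2 : t <= eps / (16 * K)) by (unfold t; eapply Rle_trans; [apply Rmin_l| apply Rmin_r]).
  assert (Ht3 : t <= (w1 - x1)/2) by (unfold t; eapply Rle_trans; [apply Rmin_r| eapply Rle_trans; [apply Rmin_l| apply Rmin_l]]).
  assert (Ht4 : t <= (x2 - w1)/2) by (unfold t; eapply Rle_trans; [apply Rmin_r| eapply Rle_trans; [apply Rmin_l| apply Rmin_r]]).
  assert (Ht5 : t <= (w2 - y1)/2) by (unfold t; eapply Rle_trans; [apply Rmin_r| eapply Rle_trans; [apply Rmin_r| apply Rmin_l]]).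
  assert (Ht6 : t <= (y2 - w2)/2) by (unfold t; eapply Rle_trans; [apply Rmin_r| eapply Rle_trans; [apply Rmin_r| apply Rmin_r]]).
  clearbody t.
  set (a := w1 - t). set (b := w1 + t). set (c := w2 - t). set (d := w2 + t).
  assert (G1 : Rect f x1 a y1 y2 = RtoC 0).
  { apply goursat; try (unfold a; lra). intros z [Hzx Hzy]. apply Hh. split; unfold a in *; lra.
    intro E. rewrite E in Hzx. simpl in Hzx. unfold a in *; lra. }
  assert (G2 : Rect f b x2 y1 y2 = RtoC 0).
  { apply goursat; try (unfold b; lra). intros z [Hzx Hzy]. apply Hh. split; unfold b in *; lra.
    intro E. rewrite E in Hzx. simpl in Hzx. unfold b in *; lra. }
  assert (G3 : Rect f a b y1 c = RtoC 0).
  { apply goursat; try (unfold a, b, c; lra). intros z [Hzx Hzy]. apply Hh. split; unfold a, b, c in *; lra.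
    intro E. rewrite E in Hzy. simpl in Hzy. unfold c in *; lra. }
  assert (G4 : Rect f a b d y2 = RtoC 0).
  { apply goursat; try (unfold a, b, d; lra). intros z [Hzx Hzy]. apply Hh. split; unfold a, b, d in *; lra.
    intro E. rewrite E in Hzy. simpl in Hzy. unfold d in *; lra. }
  assert (Split : Rect f x1 x2 y1 y2 = (Rect f x1 a y1 y2 + (Rect f a b y1 c + Rect f a b c d + Rect f a b d y2) + Rect f b x2 y1 y2)%C).
  { rewrite (Rect_splitX f x1 a x2); try (unfold a; lra); auto.
    rewrite (Rect_splitX f a b x2); try (unfold a, b; lra).
    2:{ eapply ContRect_sub; eauto; unfold a; lra. }
    rewrite (Rect_splitY f a b y1 c y2); try (unfold a, b, c; lra).
    2:{ eapply ContRect_sub; eauto; unfold a, b; lra. }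
    rewrite (Rect_splitY f a b c d y2); try (unfold a, b, c, d; lra).
    2:{ eapply ContRect_sub; eauto; unfold a, b, c; lra. }
    ring. }
  assert (Bc : Cmod (Rect f a b c d) <= 2 * ((b - a) + (d - c)) * K).
  { apply Rect_bound; try (unfold a, b, c, d; lra).
    apply ContRect_Bd. eapply ContRect_sub; eauto; unfold a, b, c, d; lra.
    intros z [Hzx Hzy] _.
    assert (Hz : Cmod (z - (w1, w2)) < d1).
    { eapply Rle_lt_trans. apply Cmod_le_re_im. destruct z as [zx zy]; simpl in *.
      unfold a, b, c, d in *. apply Rle_lt_trans with (t + t).
      apply Rplus_le_compat; apply Rabs_le; lra. lra. }
    specialize (H1 z Hz). generalize (Cmod_tri3 (f z) (f (w1, w2)) 0).
    replace (f z - 0)%C with (f z) by ring. replace (f (w1, w2) - 0)%C with (f (w1, w2)) by ring.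
    unfold K. lra. }
  rewrite G1, G2, G3, G4 in Split.
  replace (RtoC 0 + (RtoC 0 + Rect f a b c d + RtoC 0) + RtoC 0)%C with (Rect f a b c d) in Split by ring.
  assert (Hb : 2 * ((b - a) + (d - c)) * K = 8 * t * K) by (unfold a, b, c, d; ring).
  assert (8 * t * K <= eps / 2).
  { apply Rle_trans with (8 * (eps / (16 * K)) * K).
    apply Rmult_le_compat_r; lra. right; field; lra. }
  unfold eps in *. rewrite Split in *. lra.
Qed.

Lemma Re_Cinv z : Re (/ z)%C = Re z / (Re z ^ 2 + Im z ^ 2).
Proof. reflexivity. Qed.
Lemma Im_Cinv z : Im (/ z)%C = - Im z / (Re z ^ 2 + Im z ^ 2).
Proof. reflexivity. Qed.

Lemma RInt_pos_lb (f : R -> R) a b m : a < b -> ex_RInt f a b -> 0 < m ->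
  (forall x, a <= x <= b -> m <= f x) -> 0 < RInt f a b.
Proof.
  intros Hab Hf Hm H.
  apply Rlt_le_trans with (RInt (fun _ => m) a b).
  rewrite RInt_const. simpl. unfold scal; simpl; unfold mult; simpl. apply Rmult_lt_0_compat; lra.
  apply RInt_le; auto. lra. apply ex_RInt_const. intros; apply H; lra.
Qed.

Lemma frac_lb k D M : 0 < k -> 0 < D -> D <= M -> k / M <= k / D.
Proof. intros. unfold Rdiv. apply Rmult_le_compat_l. lra. apply Rinv_le_contravar; lra. Qed.

Lemma Cmod_nonzero_sub z w : Cmod (z - w) > 0 -> z <> w.
Proof. intros H E. subst. replace (w - w)%C with (RtoC 0) in H by ring. rewrite Cmod_0 in H. lra. Qed.

Lemma sq_pos2 p q : q <> 0 -> 0 < p ^ 2 + q ^ 2.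
Proof. intros H. assert (0 < q ^ 2) by (rewrite <- Rsqr_pow2; apply Rsqr_pos_lt; auto).
  assert (0 <= p ^ 2) by apply pow2_ge_0. lra. Qed.

Lemma sq_pos2' p q : p <> 0 -> 0 < p ^ 2 + q ^ 2.
Proof. intros H. rewrite Rplus_comm. apply sq_pos2; auto. Qed.

Lemma im_lb x y0 w1 w2 M : 0 < w2 - y0 -> (x + - w1) ^ 2 + (y0 + - w2) ^ 2 <= M ->
  (w2 - y0) / M <= Im (/ ((x, y0) - (w1, w2)))%C.
Proof. intros H1 H2. rewrite Im_Cinv. unfold Re, Im, Cminus, Cplus, Copp; cbn [fst snd]. replace (- (y0 + - w2)) with (w2 - y0) by ring.
  apply frac_lb; auto. apply sq_pos2; lra. Qed.

Lemma im_lb' x y0 w1 w2 M : 0 < y0 - w2 -> (x + - w1) ^ 2 + (y0 + - w2) ^ 2 <= M ->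
  (y0 - w2) / M <= - Im (/ ((x, y0) - (w1, w2)))%C.
Proof. intros H1 H2. rewrite Im_Cinv. unfold Re, Im, Cminus, Cplus, Copp; cbn [fst snd]. replace (- (- (y0 + - w2) / ((x + - w1) ^ 2 + (y0 + - w2) ^ 2)))
  with ((y0 - w2) / ((x + - w1) ^ 2 + (y0 + - w2) ^ 2)) by (field; apply Rgt_not_eq, sq_pos2; lra).
  apply frac_lb; auto. apply sq_pos2; lra. Qed.

Lemma re_lb x0 y w1 w2 M : 0 < x0 - w1 -> (x0 + - w1) ^ 2 + (y + - w2) ^ 2 <= M ->
  (x0 - w1) / M <= Re (/ ((x0, y) - (w1, w2)))%C.
Proof. intros H1 H2. rewrite Re_Cinv. unfold Re, Im, Cminus, Cplus, Copp; cbn [fst snd]. replace (x0 - w1) with (x0 + - w1) by ring.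
  apply frac_lb. lra. rewrite Rplus_comm. apply sq_pos2; lra. exact H2. Qed.

Lemma re_lb' x0 y w1 w2 M : 0 < w1 - x0 -> (x0 + - w1) ^ 2 + (y + - w2) ^ 2 <= M ->
  (w1 - x0) / M <= - Re (/ ((x0, y) - (w1, w2)))%C.
Proof. intros H1 H2. rewrite Re_Cinv. unfold Re, Im, Cminus, Cplus, Copp; cbn [fst snd]. replace (- ((x0 + - w1) / ((x0 + - w1) ^ 2 + (y + - w2) ^ 2)))
  with ((w1 - x0) / ((x0 + - w1) ^ 2 + (y + - w2) ^ 2)) by (field; apply Rgt_not_eq, sq_pos2'; lra).
  apply frac_lb; auto. apply sq_pos2'; lra. Qed.

Lemma ex_RInt_opp (f : R -> R) a b : ex_RInt f a b -> ex_RInt (fun x => - f x) a b.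
Proof. intros H. apply (ex_RInt_opp f a b H). Qed.

Lemma RInt_oppR (f : R -> R) a b : ex_RInt f a b -> RInt (fun x => - f x) a b = - RInt f a b.
Proof. intros H. apply (RInt_opp f a b H). Qed.

Section Square.
Variables (c1 c2 s : R).
Hypothesis Hs : 0 < s.
Let z0 : C := (c1, c2).
Let SqR f := Rect f (c1 - s) (c1 + s) (c2 - s) (c2 + s).
Let onB := onBd (c1 - s) (c1 + s) (c2 - s) (c2 + s).
Let inS := inRect (c1 - s) (c1 + s) (c2 - s) (c2 + s).

Lemma bd_far z : onB z -> s <= Cmod (z - z0).
Proof.
  intros [[Hx Hy] H]. destruct z as [x y]. unfold z0. simpl in *.
  assert (A := Cmod_re ((x, y) - (c1, c2))%C). assert (B := Cmod_im ((x, y) - (c1, c2))%C).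
  simpl in A, B.
  destruct H as [H|[H|[H|H]]]; subst.
  - replace (c1 - s + - c1) with (- s) in A by ring. rewrite Rabs_Ropp, Rabs_pos_eq in A; lra.
  - replace (c1 + s + - c1) with s in A by ring. rewrite Rabs_pos_eq in A; lra.
  - replace (c2 - s + - c2) with (- s) in B by ring. rewrite Rabs_Ropp, Rabs_pos_eq in B; lra.
  - replace (c2 + s + - c2) with s in B by ring. rewrite Rabs_pos_eq in B; lra.
Qed.

Lemma near_inside w : Cmod (w - z0) < s -> c1 - s < Re w < c1 + s /\ c2 - s < Im w < c2 + s.
Proof.
  intros H. destruct w as [x y]. unfold z0 in *.
  assert (A := Cmod_re ((x, y) - (c1, c2))%C). assert (B := Cmod_im ((x, y) - (c1, c2))%C).
  simpl in *. assert (A' : Rabs (x + - c1) < s) by lra. assert (B' : Rabs (y + - c2) < s) by lra.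
  apply Rabs_def2 in A'. apply Rabs_def2 in B'. lra.
Qed.

Lemma bd_dist z w : onB z -> s - Cmod (w - z0) <= Cmod (z - w).
Proof.
  intros Hz. generalize (bd_far z Hz) (Cmod_tri3 z w z0). rewrite (Cmod_minus_sym w z0). lra.
Qed.

Lemma near_inS w : Cmod (w - z0) < s -> inS w.
Proof. intros H. destruct (near_inside w H). split; lra. Qed.

Lemma contC_invlin w z : z <> w -> contC (fun u => / (u - w))%C z.
Proof.
  intros H. apply contC_inv. apply contC_minus. apply contC_id. apply contC_const.
  intro E. apply H. replace z with ((z - w) + w)%C by ring. rewrite E. ring.
Qed.

Lemma ContBd_invlin w : Cmod (w - z0) < s -> ContBd (fun u => / (u - w))%C (c1 - s) (c1 + s) (c2 - s) (c2 + s).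
Proof.
  intros H z Hz. apply contC_invlin. apply Cmod_nonzero_sub. generalize (bd_dist z w Hz). lra.
Qed.

Definition Jw (w : C) := SqR (fun u => / (u - w))%C.

Lemma Im_Rect f x1 x2 y1 y2 : Im (Rect f x1 x2 y1 y2) =
  RInt (fun x => Im (f (x, y1))) x1 x2 + RInt (fun y => Re (f (x2, y))) y1 y2
  - RInt (fun x => Im (f (x, y2))) x1 x2 - RInt (fun y => Re (f (x1, y))) y1 y2.
Proof. unfold Rect, CInt. cbn -[RInt]. ring. Qed.

Lemma Jw_pos w : Cmod (w - z0) < s -> 0 < Im (Jw w).
Proof.
  intros H. destruct (near_inside w H) as [[X1 X2] [Y1 Y2]].
  assert (HB := ContBd_invlin w H).
  unfold Jw, SqR. rewrite Im_Rect.
  destruct w as [w1 w2]; simpl in X1, X2, Y1, Y2.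
  set (M := 8 * s * s).
  assert (HM : 0 < M) by (unfold M; nra).
  assert (Dle : forall p q, Rabs p <= 2 * s -> Rabs q <= 2 * s -> p ^ 2 + q ^ 2 <= M).
  { intros p q Hp Hq. apply Rabs_le_between in Hp. apply Rabs_le_between in Hq. unfold M. nra. }
  assert (T1 : 0 < RInt (fun x => Im (/ ((x, (c2 - s)%R) - (w1, w2)))%C) (c1 - s) (c1 + s)).
  { apply RInt_pos_lb with ((w2 - (c2 - s)) / M). lra.
    apply ex_Im. lra. apply (cont_on_hb (fun u => / (u - (w1, w2)))%C (c1 - s) (c1 + s) (c2 - s) (c2 + s)); auto; lra.
    apply Rdiv_lt_0_compat; lra.
    intros x Hx. apply im_lb. lra. apply Dle; apply Rabs_le; lra. }
  assert (T2 : 0 < RInt (fun y => Re (/ (((c1 + s)%R, y) - (w1, w2)))%C) (c2 - s) (c2 + s)).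
  { apply RInt_pos_lb with ((c1 + s - w1) / M). lra.
    apply ex_Re. lra. apply (cont_on_vb (fun u => / (u - (w1, w2)))%C (c1 - s) (c1 + s) (c2 - s) (c2 + s)); auto; lra.
    apply Rdiv_lt_0_compat; lra.
    intros y Hy. apply re_lb. lra. apply Dle; apply Rabs_le; lra. }
  assert (T3 : 0 < RInt (fun x => - Im (/ ((x, (c2 + s)%R) - (w1, w2)))%C) (c1 - s) (c1 + s)).
  { apply RInt_pos_lb with ((c2 + s - w2) / M). lra.
    apply ex_RInt_opp. apply ex_Im. lra. apply (cont_on_hb (fun u => / (u - (w1, w2)))%C (c1 - s) (c1 + s) (c2 - s) (c2 + s)); auto; lra.
    apply Rdiv_lt_0_compat; lra.
    intros x Hx. apply im_lb'. lra. apply Dle; apply Rabs_le; lra. }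
  assert (T4 : 0 < RInt (fun y => - Re (/ (((c1 - s)%R, y) - (w1, w2)))%C) (c2 - s) (c2 + s)).
  { apply RInt_pos_lb with ((w1 - (c1 - s)) / M). lra.
    apply ex_RInt_opp. apply ex_Re. lra. apply (cont_on_vb (fun u => / (u - (w1, w2)))%C (c1 - s) (c1 + s) (c2 - s) (c2 + s)); auto; lra.
    apply Rdiv_lt_0_compat; lra.
    intros y Hy. apply re_lb'. lra. apply Dle; apply Rabs_le; lra. }
  rewrite RInt_oppR in T3, T4.
  3: apply ex_Im; [lra | apply (cont_on_hb (fun u => / (u - (w1, w2)))%C (c1 - s) (c1 + s) (c2 - s) (c2 + s)); auto; lra].
  2: apply ex_Re; [lra | apply (cont_on_vb (fun u => / (u - (w1, w2)))%C (c1 - s) (c1 + s) (c2 - s) (c2 + s)); auto; lra].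
  lra.
Qed.

Variable g : C -> C.
Hypothesis Hg : forall z, inS z -> hol g z.

Lemma ContBd_g : ContBd g (c1 - s) (c1 + s) (c2 - s) (c2 + s).
Proof. intros z [Hz _]. destruct (Hg z Hz) as [l Hl]. eapply holAt_contC; eauto. Qed.

Lemma cauchy w : Cmod (w - z0) < s -> SqR (fun u => g u * / (u - w))%C = (g w * Jw w)%C.
Proof.
  intros H. destruct (Hg w (near_inS w H)) as [l Hl].
  destruct (near_inside w H) as [Wx Wy].
  set (q := fun u => ((g u - g w) * / (u - w))%C).
  set (h := fun u => if excluded_middle_informative (u = w) then l else q u).
  assert (Hh0 : SqR h = RtoC 0).
  { unfold SqR. apply (goursat_exc h _ _ _ _ w); try lra.
    - intros e He. destruct (Hl (e / 2)) as [d [Hd Hd']]. lra.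
      exists d. split; auto. intros u Hu. unfold h.
      destruct (excluded_middle_informative (w = w)) as [_|C]; [|congruence].
      destruct (excluded_middle_informative (u = w)) as [E|E].
      + replace (l - l)%C with (RtoC 0) by ring. rewrite Cmod_0. auto.
      + assert (Huw : (u - w)%C <> RtoC 0). { intro E'. apply E. replace u with ((u - w) + w)%C by ring. rewrite E'. ring. }
        unfold q. replace ((g u - g w) * / (u - w) - l)%C with ((g u - g w - l * (u - w)) / (u - w))%C by (field; auto).
        rewrite Cmod_div; auto. specialize (Hd' u Hu).
        assert (0 < Cmod (u - w)) by (apply Cmod_gt_0; auto).
        apply Rle_lt_trans with (e / 2). apply Rmult_le_reg_r with (Cmod (u - w)); auto.
        unfold Rdiv at 1. rewrite Rmult_assoc, Rinv_l, Rmult_1_r by lra. lra. lra.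
    - intros z Hz Hzw.
      assert (Hr : 0 < Cmod (z - w)). { apply Cmod_gt_0. intro E. apply Hzw. replace z with ((z - w) + w)%C by ring. rewrite E. ring. }
      destruct (Hg z Hz) as [lz Hlz].
      eexists. apply holAt_ext with (f := q) (r := Cmod (z - w)); auto.
      + intros u Hu. unfold h. destruct (excluded_middle_informative (u = w)) as [E|E]; auto.
        exfalso. subst. rewrite Cmod_minus_sym in Hu. lra.
      + unfold q. apply holAt_mult. apply holAt_minus_const; eauto. apply holAt_invlin; auto. }
  assert (E1 : SqR h = SqR q).
  { unfold SqR. apply Rect_ext; try lra. intros z Hz Hb. unfold h.
    destruct (excluded_middle_informative (z = w)) as [E|E]; auto.
    exfalso. subst z. assert (HH := bd_dist w w (conj Hz Hb)). replace (w - w)%C with (RtoC 0) in HH by ring. rewrite Cmod_0 in HH. lra. }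
  assert (E2 : SqR q = SqR (fun u => g u * / (u - w) - g w * / (u - w))%C).
  { unfold SqR. apply Rect_ext; try lra. intros z _ _. unfold q. ring. }
  unfold SqR in E2. rewrite Rect_minus in E2; try lra.
  2:{ intros z Hz. apply contC_mult. apply ContBd_g; auto. apply ContBd_invlin; auto. }
  2:{ intros z Hz. apply contC_mult. apply contC_const. apply ContBd_invlin; auto. }
  rewrite Rect_cmul in E2; try lra. 2: apply ContBd_invlin; auto.
  unfold SqR in Hh0, E1. rewrite Hh0 in E1. rewrite <- E1 in E2. unfold Jw, SqR.
  apply Ceq_minus. rewrite E2. reflexivity.
Qed.

End Square.

Fixpoint csum (F : nat -> C) (n : nat) : C :=
  match n with O => RtoC 0 | S n => (csum F n + F n)%C end.

Lemma csum_mul c F n : (c * csum F n)%C = csum (fun m => c * F m)%C n.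
Proof. induction n; simpl. ring. rewrite <- IHn. ring. Qed.

Lemma csum_zero F n : (forall m, (m < n)%nat -> F m = RtoC 0) -> csum F n = RtoC 0.
Proof. induction n; simpl; intros H. auto. rewrite IHn, H; auto. ring. Qed.

Lemma geom_id (a b : C) N : a <> RtoC 0 -> (a - b)%C <> RtoC 0 ->
  (/ (a - b))%C = (csum (fun m => b ^ m * / a ^ (S m)) N + (b * / a) ^ N * / (a - b))%C.
Proof.
  intros Ha Hab. induction N. simpl. field; auto.
  rewrite IHN at 1. simpl csum. rewrite !Cpow_S. rewrite !Cpow_mult_l, !Cpow_inv by auto.
  assert (HaN : (a ^ N)%C <> RtoC 0) by (apply Cpow_nz; auto).
  set (A := (a ^ N)%C) in *. set (B := (b ^ N)%C). field. repeat split; auto.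
Qed.

Lemma least_nat (P : nat -> Prop) : (exists n, P n) -> exists n, P n /\ forall m, (m < n)%nat -> ~ P m.
Proof.
  intros [n Hn]. induction n as [n IH] using (well_founded_induction Wf_nat.lt_wf).
  destruct (classic (exists m, (m < n)%nat /\ P m)) as [[m [Hm Pm]]|H].
  - apply (IH m Hm Pm).
  - exists n. split; auto. intros m Hm Pm. apply H. eauto.
Qed.

Section Expansion.
Variables (c1 c2 s : R).
Hypothesis Hs : 0 < s.
Let z0 : C := (c1, c2).
Let SqR f := Rect f (c1 - s) (c1 + s) (c2 - s) (c2 + s).
Let onB := onBd (c1 - s) (c1 + s) (c2 - s) (c2 + s).
Let inS := inRect (c1 - s) (c1 + s) (c2 - s) (c2 + s).
Variable g : C -> C.
Hypothesis Hg : forall z, inS z -> hol g z.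
Variable G : R.
Hypothesis HG : forall z, inS z -> Cmod (g z) <= G.

Lemma Rect_csum (F : nat -> C -> C) (Rm : C -> C) N :
  (forall m, ContBd (F m) (c1 - s) (c1 + s) (c2 - s) (c2 + s)) ->
  ContBd Rm (c1 - s) (c1 + s) (c2 - s) (c2 + s) ->
  SqR (fun u => csum (fun m => F m u) N + Rm u)%C = (csum (fun m => SqR (F m)) N + SqR Rm)%C.
Proof.
  intros HF. revert Rm. induction N; intros Rm HR; simpl.
  - unfold SqR. rewrite (Rect_ext (c1 - s) (c1 + s) (c2 - s) (c2 + s) ltac:(lra) ltac:(lra) _ Rm). ring. intros; ring.
  - unfold SqR. rewrite (Rect_ext (c1 - s) (c1 + s) (c2 - s) (c2 + s) ltac:(lra) ltac:(lra) _ (fun u => csum (fun m => F m u) N + (F N u + Rm u))%C).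
    2:{ intros; ring. }
    fold (SqR (fun u => csum (fun m => F m u) N + (F N u + Rm u))%C).
    rewrite IHN. unfold SqR. rewrite Rect_plus; try lra; auto. ring.
    apply ContBd_plus; auto.
Qed.

Definition Cm m := SqR (fun u => g u * / (u - z0) ^ (S m))%C.

Lemma bd_ne0 u : onB u -> (u - z0)%C <> RtoC 0.
Proof. intros H E. assert (A := bd_far c1 c2 s Hs u H). fold z0 in A. rewrite E, Cmod_0 in A. lra. Qed.

Lemma contC_inv_pow u m : (u - z0)%C <> RtoC 0 -> contC (fun v => / (v - z0) ^ m)%C u.
Proof. intros H. apply contC_inv. apply contC_pow. apply contC_minus. apply contC_id. apply contC_const.
  apply Cpow_nz; auto. Qed.

Lemma expansion w N : Cmod (w - z0) < s ->
  (g w * Jw c1 c2 s w)%C = (csum (fun m => (w - z0) ^ m * Cm m) N +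
     SqR (fun u => g u * ((w - z0) * / (u - z0)) ^ N * / (u - w)))%C.
Proof.
  intros Hw. rewrite <- (cauchy c1 c2 s Hs g Hg w Hw). fold z0.
  assert (Hne : forall u, onB u -> (u - w)%C <> RtoC 0).
  { intros u Hu E. assert (A := bd_dist c1 c2 s Hs u w Hu). fold z0 in A. rewrite E, Cmod_0 in A. lra. }
  transitivity (SqR (fun u => csum (fun m => (w - z0) ^ m * (g u * / (u - z0) ^ (S m))) N +
      g u * ((w - z0) * / (u - z0)) ^ N * / (u - w))%C).
  { unfold SqR. apply Rect_ext; try lra. intros u Hu Hb.
    assert (A := bd_ne0 u (conj Hu Hb)). assert (B := Hne u (conj Hu Hb)).
    assert (B' : (u - z0 - (w - z0))%C <> RtoC 0).
    { replace (u - z0 - (w - z0))%C with (u - w)%C by ring. auto. }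
    pose proof (geom_id (u - z0) (w - z0) N A B') as GI.
    replace (u - z0 - (w - z0))%C with (u - w)%C in GI by ring.
    rewrite GI at 1.
    rewrite Cmult_plus_distr_l, csum_mul. f_equal.
    - f_equal. apply functional_extensionality. intros m.
      set (P := ((w - z0) ^ m)%C). set (Q := (/ (u - z0) ^ S m)%C). ring.
    - set (X := (((w - z0) * / (u - z0)) ^ N)%C). ring. }
  rewrite Rect_csum.
  - f_equal. f_equal. apply functional_extensionality. intros m.
    unfold Cm, SqR. rewrite Rect_cmul; try lra. auto.
    intros u Hu. apply contC_mult. apply (ContBd_g c1 c2 s g Hg); auto. apply contC_inv_pow. apply bd_ne0; auto.
  - intros m u Hu. apply contC_mult. apply contC_const. apply contC_mult.
    apply (ContBd_g c1 c2 s g Hg); auto. apply contC_inv_pow. apply bd_ne0; auto.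
  - intros u Hu. apply contC_mult. apply contC_mult. apply (ContBd_g c1 c2 s g Hg); auto.
    apply contC_pow. apply contC_mult. apply contC_const. apply contC_inv. apply contC_minus. apply contC_id. apply contC_const.
    apply bd_ne0; auto.
    apply contC_invlin. intro E. apply (Hne u Hu). rewrite E. ring.
Qed.

Lemma rem_bound w N : Cmod (w - z0) < s ->
  Cmod (SqR (fun u => g u * ((w - z0) * / (u - z0)) ^ N * / (u - w)))%C
  <= 8 * s * (G * (Cmod (w - z0) / s) ^ N / (s - Cmod (w - z0))).
Proof.
  intros Hw. set (b := Cmod (w - z0)) in *. assert (Hb : 0 <= b) by apply Cmod_ge_0.
  assert (Hne : forall u, onB u -> (u - w)%C <> RtoC 0).
  { intros u Hu E. assert (A := bd_dist c1 c2 s Hs u w Hu). fold z0 b in A. rewrite E, Cmod_0 in A. lra. }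
  unfold SqR. apply Rle_trans with (2 * ((c1 + s - (c1 - s)) + (c2 + s - (c2 - s))) * (G * (b / s) ^ N / (s - b))).
  apply Rect_bound; try lra.
  - intros u Hu. apply contC_mult. apply contC_mult. apply (ContBd_g c1 c2 s g Hg); auto.
    apply contC_pow. apply contC_mult. apply contC_const. apply contC_inv. apply contC_minus. apply contC_id. apply contC_const.
    apply bd_ne0; auto.
    apply contC_invlin. intro E. apply (Hne u Hu). rewrite E. ring.
  - intros u Hu Hbd. assert (HuB : onB u) by (split; auto).
    assert (A := bd_far c1 c2 s Hs u HuB). fold z0 in A.
    assert (B := bd_dist c1 c2 s Hs u w HuB). fold z0 b in B.
    assert (C0 := bd_ne0 u HuB). assert (D0 := Hne u HuB).
    rewrite !Cmod_mult, Cmod_pow, Cmod_mult, !Cmod_inv; auto. fold b.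
    assert (P1 : 0 < Cmod (u - z0)) by (apply Cmod_gt_0; auto).
    assert (P2 : 0 < Cmod (u - w)) by (apply Cmod_gt_0; auto).
    assert (P3 : 0 <= b * / Cmod (u - z0)) by (apply Rmult_le_pos; auto; left; apply Rinv_0_lt_compat; auto).
    unfold Rdiv.
    apply Rmult_le_compat.
    + apply Rmult_le_pos. apply Cmod_ge_0. apply pow_le. auto.
    + left; apply Rinv_0_lt_compat; auto.
    + apply Rmult_le_compat. apply Cmod_ge_0. apply pow_le. auto. apply HG; auto.
      apply pow_incr. split. auto. apply Rmult_le_compat_l; auto. apply Rinv_le_contravar; lra.
    + apply Rinv_le_contravar; lra.
  right. unfold Rdiv. ring.
Qed.

End Expansion.

Lemma local_dich c1 c2 s g G : 0 < s ->
  (forall z, inRect (c1 - s) (c1 + s) (c2 - s) (c2 + s) z -> hol g z) ->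
  (forall z, inRect (c1 - s) (c1 + s) (c2 - s) (c2 + s) z -> Cmod (g z) <= G) ->
  (forall w, Cmod (w - (c1, c2)) < s / 2 -> g w = RtoC 0) \/
  (exists r, 0 < r /\ forall w, 0 < Cmod (w - (c1, c2)) < r -> g w <> RtoC 0).
Proof.
  intros Hs Hg HG.
  set (z0 := (c1, c2)).
  assert (HG0 : 0 <= G).
  { apply Rle_trans with (Cmod (g z0)). apply Cmod_ge_0. apply HG. unfold z0; split; simpl; lra. }
  set (Rm := fun w N => Rect (fun u => g u * ((w - z0) * / (u - z0)) ^ N * / (u - w))%C
                          (c1 - s) (c1 + s) (c2 - s) (c2 + s)).
  assert (R16 : forall w N, Cmod (w - z0) < s / 2 -> Cmod (Rm w N) <= 16 * G * (Cmod (w - z0) / s) ^ N).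
  { intros w N Hw. unfold Rm. eapply Rle_trans. apply (rem_bound c1 c2 s Hs g Hg G HG w N). unfold z0 in Hw; lra.
    fold z0. set (b := Cmod (w - z0)) in *. assert (0 <= b) by apply Cmod_ge_0.
    assert (Hq : 0 <= G * (b / s) ^ N) by (apply Rmult_le_pos; auto; apply pow_le; apply Rmult_le_pos; auto; left; apply Rinv_0_lt_compat; lra).
    replace (8 * s * (G * (b / s) ^ N / (s - b))) with ((G * (b / s) ^ N) * (8 * s / (s - b))) by (field; lra).
    replace (16 * G * (b / s) ^ N) with ((G * (b / s) ^ N) * 16) by ring.
    apply Rmult_le_compat_l; auto. apply Rmult_le_reg_r with (s - b). lra.
    field_simplify; lra. }
  assert (EXP : forall w N, Cmod (w - z0) < s -> (g w * Jw c1 c2 s w)%C =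
     (csum (fun m => (w - z0) ^ m * Cm c1 c2 s g m) N + Rm w N)%C).
  { intros w N Hw. apply (expansion c1 c2 s Hs g Hg w N Hw). }
  assert (JNZ : forall w, Cmod (w - z0) < s -> Jw c1 c2 s w <> RtoC 0).
  { intros w Hw E. assert (A := Jw_pos c1 c2 s Hs w Hw). rewrite E in A. simpl in A. lra. }
  destruct (classic (forall m, Cm c1 c2 s g m = RtoC 0)) as [Hall | Hnot].
  - left. intros w Hw. fold z0 in Hw.
    assert (Hw' : Cmod (w - z0) < s) by lra.
    set (b := Cmod (w - z0)) in *. assert (Hb : 0 <= b) by apply Cmod_ge_0.
    set (X := Cmod (g w * Jw c1 c2 s w)%C).
    assert (HX : forall N, X <= 16 * G * (b / s) ^ N).
    { intros N. unfold X. rewrite (EXP w N Hw'). rewrite csum_zero.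
      replace (RtoC 0 + Rm w N)%C with (Rm w N) by ring. apply R16; auto.
      intros m _. rewrite Hall. ring. }
    assert (X0 : X = 0).
    { apply Rle_antisym. 2: apply Cmod_ge_0. apply Rnot_lt_le. intro Hpos.
      destruct (pow_lt_1_zero (b / s)) with (y := X / (16 * G + 1)) as [N HN].
      { rewrite Rabs_pos_eq. apply Rmult_lt_reg_r with s; auto. unfold Rdiv. rewrite Rmult_assoc, Rinv_l; lra.
        apply Rmult_le_pos; auto. left; apply Rinv_0_lt_compat; lra. }
      { apply Rdiv_lt_0_compat; lra. }
      specialize (HN N (le_n N)). rewrite Rabs_pos_eq in HN.
      2:{ apply pow_le. apply Rmult_le_pos; auto. left; apply Rinv_0_lt_compat; lra. }
      assert (P : 0 <= (b / s) ^ N) by (apply pow_le; apply Rmult_le_pos; auto; left; apply Rinv_0_lt_compat; lra).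
      specialize (HX N).
      assert (16 * G * (b / s) ^ N <= (16 * G + 1) * (b / s) ^ N) by nra.
      assert ((16 * G + 1) * (b / s) ^ N < (16 * G + 1) * (X / (16 * G + 1))).
      { apply Rmult_lt_compat_l; lra. }
      assert ((16 * G + 1) * (X / (16 * G + 1)) = X) by (field; lra).
      lra. }
    apply Cmod_eq_0 in X0.
    destruct (classic (g w = RtoC 0)) as [E|E]; auto.
    exfalso. apply (Cmult_neq_0 (g w) (Jw c1 c2 s w) E (JNZ w Hw')). auto.
  - right. apply not_all_ex_not in Hnot.
    destruct (least_nat _ Hnot) as [m0 [Hm0 Hlt]].
    set (Cc := Cmod (Cm c1 c2 s g m0)).
    assert (HCc : 0 < Cc) by (apply Cmod_gt_0; auto).
    assert (Hsp : 0 < s ^ S m0) by (apply pow_lt; lra).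
    exists (Rmin (s / 2) (Cc * s ^ S m0 / (16 * G + 1))). split.
    { apply Rmin_pos. lra. apply Rdiv_lt_0_compat. apply Rmult_lt_0_compat; lra. lra. }
    intros w [Hw1 Hw2]. fold z0 in Hw1, Hw2.
    assert (Hwa : Cmod (w - z0) < s / 2) by (eapply Rlt_le_trans; [apply Hw2| apply Rmin_l]).
    assert (Hwb : Cmod (w - z0) < Cc * s ^ S m0 / (16 * G + 1)) by (eapply Rlt_le_trans; [apply Hw2| apply Rmin_r]).
    assert (Hw' : Cmod (w - z0) < s) by lra.
    set (b := Cmod (w - z0)) in *.
    intro Hgw.
    assert (E := EXP w (S m0) Hw'). rewrite Hgw in E. simpl csum in E.
    rewrite csum_zero in E. 2:{ intros m Hm. apply NNPP. intro H. apply (Hlt m Hm). intro H'. apply H. rewrite H'. ring. }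
    assert (E' : ((w - z0) ^ m0 * Cm c1 c2 s g m0)%C = (- Rm w (S m0))%C).
    { replace (RtoC 0 * Jw c1 c2 s w)%C with (RtoC 0) in E by ring.
      apply (f_equal (fun t => t - Rm w (S m0))%C) in E.
      replace (RtoC 0 - Rm w (S m0))%C with (- Rm w (S m0))%C in E by ring. rewrite E. ring. }
    apply (f_equal Cmod) in E'. rewrite Cmod_opp, Cmod_mult, Cmod_pow in E'. fold b Cc in E'.
    assert (HR := R16 w (S m0) Hwa). fold b in HR.
    rewrite <- E' in HR.
    assert (Hbm : 0 < b ^ m0) by (apply pow_lt; auto).
    replace (16 * G * (b / s) ^ S m0) with (b ^ m0 * (16 * G * b / s ^ S m0)) in HR.
    2:{ unfold Rdiv. rewrite Rpow_mult_distr. simpl. rewrite pow_inv. field; repeat split; first [lra | apply pow_nonzero; lra]. }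
    apply Rmult_le_reg_l in HR; auto.
    assert (16 * G * b / s ^ S m0 < Cc).
    { apply Rmult_lt_reg_r with (s ^ S m0); auto. unfold Rdiv. rewrite Rmult_assoc, Rinv_l, Rmult_1_r by lra.
      apply Rle_lt_trans with ((16 * G + 1) * b). nra.
      apply Rmult_lt_reg_r with (/ (16 * G + 1)). apply Rinv_0_lt_compat; lra.
      replace ((16 * G + 1) * b * / (16 * G + 1)) with b by (field; lra). lra. }
    lra.
Qed.

Lemma ex_derive_hol (f : C -> C) (z : C) : @ex_derive C_AbsRing C_NormedModule f z -> hol f z.
Proof.
  intros [l [_ Hd]]. exists l.
  intros e He.
  specialize (Hd z (fun P H => H)).
  destruct (Hd (mkposreal e He)) as [d Hd']. simpl in Hd'.
  exists d. split. apply cond_pos. intros u Hu.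
  assert (Hb : @ball (AbsRing_UniformSpace C_AbsRing) z d u).
  { exact Hu. }
  specialize (Hd' u Hb). simpl in Hd'.
  replace (l * (u - z))%C with ((u - z) * l)%C by ring. exact Hd'.
Qed.

Section Global.
Variables (rho : R) (v : C -> C).
Hypothesis Hrho : 0 < rho.
Hypothesis Han : analytic_on_strip rho v.
Variable M : R.
Hypothesis HM : forall z, strip rho z -> Cmod (v z) <= M.
Hypothesis Hnc : nonconstant_on_strip rho v.

Lemma hol_v z : strip rho z -> hol v z.
Proof. intros H. apply ex_derive_hol. apply Han; auto. Qed.

Lemma contC_v z : strip rho z -> contC v z.
Proof. intros H. destruct (hol_v z H) as [l Hl]. eapply holAt_contC; eauto. Qed.

Lemma LD_strip (c : C) z : strip rho z ->
  (exists s, 0 < s /\ forall w, Cmod (w - z) < s -> v w = c) \/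
  (exists r, 0 < r /\ forall w, 0 < Cmod (w - z) < r -> v w <> c).
Proof.
  intros Hz. unfold strip in Hz. destruct z as [c1 c2]. simpl in Hz.
  set (s := (rho - Rabs c2) / 2).
  assert (Hs : 0 < s) by (unfold s; lra).
  assert (Hsq : forall u, inRect (c1 - s) (c1 + s) (c2 - s) (c2 + s) u -> strip rho u).
  { intros u [_ Hu]. unfold strip.
    destruct (proj1 (Rabs_le_between c2 (Rabs c2)) (Rle_refl _)) as [Hc1 Hc2].
    apply Rabs_def1; unfold s in Hu; lra. }
  destruct (local_dich c1 c2 s (fun u => v u - c)%C (M + Cmod c)) as [H|H]; auto.
  - intros u Hu. destruct (hol_v u (Hsq u Hu)) as [l Hl]. exists l. apply holAt_minus_const; auto.
  - intros u Hu. assert (Cmod (v u) <= M) by (apply HM; auto).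
    replace (v u - c)%C with (v u + (- c))%C by ring. eapply Rle_trans. apply Cmod_triangle. rewrite Cmod_opp. lra.
  - left. exists (s / 2). split. lra. intros w Hw. apply H in Hw. apply Ceq_minus. auto.
  - right. destruct H as [r [Hr H]]. exists r. split; auto. intros w Hw E. apply (H w Hw). rewrite E. ring.
Qed.

Lemma strip_segment z0 p t : strip rho z0 -> strip rho p -> 0 <= t <= 1 ->
  strip rho (z0 + RtoC t * (p - z0))%C.
Proof.
  unfold strip. destruct z0 as [a1 a2], p as [b1 b2]. simpl. intros H1 H2 Ht.
  replace (a2 + (t * (b2 + - a2) + 0 * (b1 + - a1))) with ((1 - t) * a2 + t * b2) by ring.
  eapply Rle_lt_trans. apply Rabs_triang. rewrite !Rabs_mult, (Rabs_pos_eq (1 - t)), (Rabs_pos_eq t) by lra.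
  assert ((1 - t) * Rabs a2 <= (1 - t) * rho) by (apply Rmult_le_compat_l; lra).
  destruct (Rle_lt_or_eq_dec 0 t (proj1 Ht)) as [Hp|Hz].
  - assert (t * Rabs b2 < t * rho) by (apply Rmult_lt_compat_l; lra). lra.
  - subst t. lra.
Qed.

Lemma Cmod_seg z0 p t u : Cmod ((z0 + RtoC t * (p - z0)) - (z0 + RtoC u * (p - z0)))%C = Rabs (t - u) * Cmod (p - z0).
Proof.
  replace ((z0 + RtoC t * (p - z0)) - (z0 + RtoC u * (p - z0)))%C with (RtoC (t - u) * (p - z0))%C.
  rewrite Cmod_mult, Cmod_R. auto.
  unfold RtoC. apply injective_projections; destruct z0, p; simpl; ring.
Qed.

Lemma propagation (c : C) z0 s0 : strip rho z0 -> 0 < s0 -> (forall w, Cmod (w - z0) < s0 -> v w = c) ->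
  forall p, strip rho p -> v p = c.
Proof.
  intros Hz0 Hs0 Hball p Hp.
  destruct (classic (p = z0)) as [E|Hpz]. { subst. apply Hball. replace (z0 - z0)%C with (RtoC 0) by ring. rewrite Cmod_0; auto. }
  set (L := Cmod (p - z0)). assert (HL : 0 < L).
  { apply Cmod_gt_0. intro E. apply Hpz. replace p with ((p - z0) + z0)%C by ring. rewrite E. ring. }
  set (gam := fun t => (z0 + RtoC t * (p - z0))%C).
  set (A := fun t => 0 <= t <= 1 /\ forall u, 0 <= u <= t -> v (gam u) = c).
  assert (A0 : A 0).
  { split. lra. intros u Hu. replace u with 0 by lra. apply Hball. unfold gam.
    replace (z0 + RtoC 0 * (p - z0) - z0)%C with (RtoC 0) by ring. rewrite Cmod_0; auto. }
  destruct (completeness A) as [tau [Hub Hleast]].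
  { exists 1. intros t [Ht _]. lra. }
  { exists 0. auto. }
  assert (Ht0 : 0 <= tau) by (apply Hub; auto).
  assert (Ht1 : tau <= 1) by (apply Hleast; intros t [Ht _]; lra).
  assert (Hbelow : forall u, 0 <= u < tau -> v (gam u) = c).
  { intros u Hu. apply NNPP. intro Hn.
    assert (tau <= u).
    { apply Hleast. intros t [Ht Ht']. apply Rnot_lt_le. intro Hut. apply Hn. apply Ht'. lra. }
    lra. }
  assert (Hdist : forall t u, Cmod (gam t - gam u) = Rabs (t - u) * L).
  { intros. unfold gam. apply Cmod_seg. }
  destruct (LD_strip c (gam tau) (strip_segment z0 p tau Hz0 Hp ltac:(lra))) as [[s [Hs Hs']]|[r [Hr Hr']]].
  - destruct (Rle_lt_or_eq_dec tau 1 Ht1) as [Hlt|Heq].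
    + exfalso. set (eta := Rmin (1 - tau) (s / (2 * L))).
      assert (Heta : 0 < eta) by (apply Rmin_pos; [lra| apply Rdiv_lt_0_compat; lra]).
      assert (A (tau + eta)).
      { split. split. lra. unfold eta. generalize (Rmin_l (1 - tau) (s / (2 * L))). lra.
        intros u Hu. destruct (Rlt_le_dec u tau) as [Hu'|Hu'].
        - apply Hbelow; lra.
        - apply Hs'. rewrite Hdist. rewrite Rabs_pos_eq by lra.
          apply Rle_lt_trans with (eta * L). apply Rmult_le_compat_r; lra.
          apply Rle_lt_trans with (s / (2 * L) * L). apply Rmult_le_compat_r. lra. apply Rmin_r.
          replace (s / (2 * L) * L) with (s / 2) by (field; lra). lra. }
      assert (tau + eta <= tau) by (apply Hub; auto). lra.
    + subst tau. replace p with (gam 1). apply Hs'. replace (gam 1 - gam 1)%C with (RtoC 0) by ring. rewrite Cmod_0; auto.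
      unfold gam. replace (RtoC 1 * (p - z0))%C with (p - z0)%C by ring. ring.
  - exfalso. destruct (Rle_lt_or_eq_dec 0 tau Ht0) as [Hpos|Heq].
    + set (u := tau - Rmin tau (r / (2 * L)) / 2).
      assert (Hm : 0 < Rmin tau (r / (2 * L))) by (apply Rmin_pos; [lra| apply Rdiv_lt_0_compat; lra]).
      assert (Hm1 := Rmin_l tau (r / (2 * L))). assert (Hm2 := Rmin_r tau (r / (2 * L))).
      apply (Hr' (gam u)).
      * rewrite Hdist. rewrite Rabs_minus_sym, Rabs_pos_eq by (unfold u; lra). split.
        apply Rmult_lt_0_compat; unfold u; lra.
        apply Rle_lt_trans with (r / (2 * L) / 2 * L). apply Rmult_le_compat_r; unfold u; lra.
        replace (r / (2 * L) / 2 * L) with (r / 4) by (field; lra). lra.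
      * apply Hbelow. unfold u; lra.
    + subst tau. set (w := (z0 + RtoC (Rmin r s0 / 2))%C).
      assert (Hm : 0 < Rmin r s0) by (apply Rmin_pos; lra).
      assert (Hw : Cmod (w - gam 0) = Rmin r s0 / 2).
      { unfold w, gam. replace (z0 + RtoC (Rmin r s0 / 2) - (z0 + RtoC 0 * (p - z0)))%C with (RtoC (Rmin r s0 / 2)) by ring.
        rewrite Cmod_R, Rabs_pos_eq; lra. }
      apply (Hr' w).
      * rewrite Hw. split. lra. generalize (Rmin_l r s0); lra.
      * apply Hball. replace (w - z0)%C with (w - gam 0)%C. rewrite Hw. generalize (Rmin_r r s0); lra.
        unfold gam. f_equal. ring.
Qed.

Lemma ISO (c : C) z : strip rho z -> exists r, 0 < r /\ forall w, 0 < Cmod (w - z) < r -> v w <> c.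
Proof.
  intros Hz. destruct (LD_strip c z Hz) as [[s [Hs H]]|H]; auto.
  exfalso. destruct Hnc as [z1 [z2 [H1 [H2 H3]]]]. apply H3.
  rewrite (propagation c z s Hz Hs H z1 H1), (propagation c z s Hz Hs H z2 H2). auto.
Qed.

End Global.

Section Final.
Variables (rho : R) (v : C -> C).
Hypothesis Hrho : 0 < rho.
Hypothesis Han : analytic_on_strip rho v.
Variable M : R.
Hypothesis HM : forall z, strip rho z -> Cmod (v z) <= M.
Hypothesis Hnc : nonconstant_on_strip rho v.

Lemma Cmod_pair_diff (x y t a : R) : Cmod ((x, y) - (t, a))%C <= Rabs (x - t) + Rabs (y - a).
Proof.
  replace ((x, y) - (t, a))%C with ((x - t)%R, (y - a)%R).
  apply Cmod_pair_le. unfold Cminus, Cplus, Copp; simpl. f_equal; ring.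
Qed.

Lemma good_y (c : C) a b : a < b -> Rabs a < rho ->
  exists y, a <= y <= b /\ forall x, 0 <= x <= 1 -> v (x, y) <> c.
Proof.
  intros Hab Ha. apply NNPP. intro Hn.
  assert (Hall : forall y, a <= y <= b -> exists x, 0 <= x <= 1 /\ v (x, y) = c).
  { intros y Hy. apply NNPP. intro H. apply Hn. exists y. split; auto. intros x Hx E. apply H; eauto. }
  assert (F : forall t : R, {r : R | 0 < r /\ forall w, 0 < Cmod (w - (t, a)) < r -> v w <> c}).
  { intro t. apply constructive_indefinite_description. apply (ISO rho v Han M HM Hnc). unfold strip; simpl; auto. }
  set (del := fun t => mkposreal (proj1_sig (F t) / 2) (Rdiv_lt_0_compat _ _ (proj1 (proj2_sig (F t))) Rlt_0_2)).
  destruct (compactness_value_1d 0 1 del) as [d Hd].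
  assert (Hdpos := cond_pos d).
  set (y := a + Rmin d (b - a) / 2).
  assert (Hm := Rmin_l d (b - a)). assert (Hm' := Rmin_r d (b - a)).
  assert (Hm0 : 0 < Rmin d (b - a)) by (apply Rmin_pos; lra).
  destruct (Hall y) as [x [Hx Hv]]. unfold y; lra.
  apply (Hd x Hx). intros [t [Ht [H1 H2]]]. unfold del in H1, H2; simpl in H1, H2.
  destruct (proj2_sig (F t)) as [Hr Hiso]. set (r := proj1_sig (F t)) in *.
  apply (Hiso (x, y)); auto. split.
  - eapply Rlt_le_trans. 2: apply Cmod_im. simpl. rewrite Rabs_pos_eq; unfold y; lra.
  - eapply Rle_lt_trans. apply Cmod_pair_diff. rewrite (Rabs_pos_eq (y - a)) by (unfold y; lra).
    unfold y. lra.
Qed.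

Lemma unif_x (c : C) y0 : Rabs y0 < rho -> (forall x, 0 <= x <= 1 -> v (x, y0) <> c) ->
  exists e, 0 < e /\ forall x y, 0 <= x <= 1 -> Rabs (y - y0) <= e -> e <= Cmod (v (x, y) - c).
Proof.
  intros Hy0 Hne.
  assert (F : forall t : R, {dl : R | 0 < dl /\ (0 <= t <= 1 -> forall u, Cmod (u - (t, y0)) < dl -> dl < Cmod (v u - c))}).
  { intro t. apply constructive_indefinite_description. destruct (classic (0 <= t <= 1)) as [Ht|Ht].
    - set (e := Cmod (v (t, y0) - c) / 2).
      assert (He : 0 < e).
      { unfold e. apply Rdiv_lt_0_compat; [|lra]. apply Cmod_gt_0. intro E. apply (Hne t Ht).
        replace (v (t, y0)) with ((v (t, y0) - c) + c)%C by ring. rewrite E. ring. }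
      destruct (contC_v rho v Han (t, y0) ltac:(unfold strip; simpl; auto) e He) as [d1 [Hd1 H1]].
      exists (Rmin d1 e). split. apply Rmin_pos; auto. intros _ u Hu.
      assert (Hu1 : Cmod (u - (t, y0)) < d1) by (eapply Rlt_le_trans; [apply Hu| apply Rmin_l]).
      specialize (H1 u Hu1).
      generalize (Cmod_tri3 (v (t, y0)) (v u) c). rewrite (Cmod_minus_sym (v (t, y0)) (v u)).
      generalize (Rmin_r d1 e). unfold e in *. lra.
    - exists 1. split. lra. intros H; contradiction. }
  set (del := fun t => mkposreal (proj1_sig (F t) / 2) (Rdiv_lt_0_compat _ _ (proj1 (proj2_sig (F t))) Rlt_0_2)).
  destruct (compactness_value_1d 0 1 del) as [d Hd].
  assert (Hdpos := cond_pos d).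
  exists (d / 2). split. lra.
  intros x y Hx Hy. apply Rnot_lt_le. intro Hlt.
  apply (Hd x Hx). intros [t [Ht [H1 H2]]]. unfold del in H1, H2; simpl in H1, H2.
  destruct (proj2_sig (F t)) as [Hr Hp]. set (dl := proj1_sig (F t)) in *.
  assert (Hc : Cmod ((x, y) - (t, y0)) < dl).
  { eapply Rle_lt_trans. apply Cmod_pair_diff. lra. }
  specialize (Hp Ht (x, y) Hc). lra.
Qed.

Lemma unif_c a b : a < b -> - rho < a -> b < rho ->
  exists l, 0 < l /\ exists e, 0 < e /\ forall c : R, exists a', a <= a' /\ a' + l <= b /\
    forall y x, a' <= y <= a' + l -> 0 <= x <= 1 -> e <= Cmod (v (x, y) - RtoC c).
Proof.
  intros Hab Ha Hb.
  assert (Hstrip : forall x y, a <= y <= b -> strip rho (x, y)).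
  { intros x y Hy. unfold strip; simpl. apply Rabs_def1; lra. }
  assert (Ha' : Rabs a < rho) by (apply Rabs_def1; lra).
  set (K := Rabs M + 1).
  assert (F : forall t : R, {p : R * R | 0 < fst p /\ a <= snd p /\ snd p + fst p <= b /\
     forall y x, snd p <= y <= snd p + fst p -> 0 <= x <= 1 -> 2 * fst p <= Cmod (v (x, y) - RtoC t)}).
  { intro t. apply constructive_indefinite_description.
    destruct (good_y (RtoC t) a b Hab Ha') as [yt [Hyt Hgood]].
    destruct (unif_x (RtoC t) yt ltac:(apply Rabs_def1; lra) Hgood) as [et [Het Hu]].
    set (dl := Rmin (et / 2) ((b - a) / 2)).
    assert (Hdl : 0 < dl) by (apply Rmin_pos; lra).
    assert (Hdl1 := Rmin_l (et / 2) ((b - a) / 2)). assert (Hdl2 := Rmin_r (et / 2) ((b - a) / 2)).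
    fold dl in Hdl1, Hdl2.
    destruct (Rle_dec a (yt - dl)) as [Hc|Hc].
    - exists (dl, yt - dl). simpl. repeat split; try lra.
      intros y x Hy Hx. apply Rle_trans with et. lra. apply Hu; auto. apply Rabs_le; lra.
    - exists (dl, yt). simpl. repeat split; try lra.
      intros y x Hy Hx. apply Rle_trans with et. lra. apply Hu; auto. apply Rabs_le; lra. }
  set (del := fun t => mkposreal (fst (proj1_sig (F t))) (proj1 (proj2_sig (F t)))).
  destruct (compactness_value_1d (- K) K del) as [d Hd].
  assert (Hdpos := cond_pos d).
  exists (Rmin d (b - a)). split. apply Rmin_pos; lra.
  exists (Rmin d 1). split. apply Rmin_pos; lra.
  assert (Hm1 := Rmin_l d (b - a)). assert (Hm2 := Rmin_r d (b - a)).
  assert (Hm3 := Rmin_l d 1). assert (Hm4 := Rmin_r d 1).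
  intros c. destruct (Rle_dec (Rabs c) K) as [Hc|Hc].
  - apply NNPP. intro Hn. apply (Hd c). apply Rabs_le_between; auto.
    intros [t [Ht [H1 H2]]]. unfold del in H1, H2; simpl in H1, H2.
    destruct (proj2_sig (F t)) as (P1 & P2 & P3 & P4).
    set (p := proj1_sig (F t)) in *.
    apply Hn. exists (snd p). split; auto. split. lra.
    intros y x Hy Hx. specialize (P4 y x ltac:(lra) Hx).
    generalize (Cmod_tri3 (v (x, y)) (RtoC c) (RtoC t)).
    replace (RtoC c - RtoC t)%C with (RtoC (c - t)) by (unfold RtoC, Cminus, Cplus, Copp; simpl; f_equal; ring).
    rewrite Cmod_R. lra.
  - exists a. split. lra. split. lra. intros y x Hy Hx.
    assert (Hv := HM (x, y) (Hstrip x y ltac:(lra))).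
    generalize (Cmod_rev_tri (RtoC c) (v (x, y))). rewrite Cmod_R, (Cmod_minus_sym (RtoC c)).
    generalize (Rle_abs M). unfold K in Hc. lra.
Qed.

Variable dlt : R.
Hypothesis Hdlt : 0 < dlt < rho.

Definition Qk (k : nat) : Prop := forall a b, dlt / 2 <= a -> a < b -> b <= dlt ->
  exists eps, 0 < eps /\ forall E : nat -> R, exists y, a <= y <= b /\
    forall j, (j < k)%nat -> forall x, 0 <= x <= 1 -> eps <= Cmod (v (x, y) - RtoC (E j)).

Lemma Qk_unif k : Qk k -> forall l, 0 < l -> exists eps, 0 < eps /\ forall a, dlt / 2 <= a -> a + l <= dlt ->
  forall E : nat -> R, exists y, a <= y <= a + l /\
    forall j, (j < k)%nat -> forall x, 0 <= x <= 1 -> eps <= Cmod (v (x, y) - RtoC (E j)).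
Proof.
  intros HQ l Hl.
  assert (F : forall a0 : R, {e : R | 0 < e /\ (dlt / 2 <= a0 <= dlt - l -> forall E : nat -> R, exists y,
     a0 + l / 4 <= y <= a0 + 3 * l / 4 /\
     forall j, (j < k)%nat -> forall x, 0 <= x <= 1 -> e <= Cmod (v (x, y) - RtoC (E j)))}).
  { intro a0. apply constructive_indefinite_description. destruct (classic (dlt / 2 <= a0 <= dlt - l)) as [Ha|Ha].
    - destruct (HQ (a0 + l / 4) (a0 + 3 * l / 4)) as [e [He H]]; try lra.
      exists e. split; auto.
    - exists 1. split. lra. intros; contradiction. }
  assert (Hl4 : 0 < l / 4) by lra.
  set (del := fun a0 => mkposreal (Rmin (proj1_sig (F a0)) (l / 4))
     (Rmin_pos _ _ (proj1 (proj2_sig (F a0))) Hl4)).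
  destruct (compactness_value_1d (dlt / 2) (dlt - l) del) as [d Hd].
  assert (Hdpos := cond_pos d).
  exists d. split; auto. intros a Ha1 Ha2 E. apply NNPP. intro Hn.
  apply (Hd a). lra. intros [a0 [Ha0 [H1 H2]]]. unfold del in H1, H2; simpl in H1, H2.
  destruct (proj2_sig (F a0)) as [Pe P]. set (e := proj1_sig (F a0)) in *.
  assert (Hm1 := Rmin_l e (l / 4)). assert (Hm2 := Rmin_r e (l / 4)). destruct (Rabs_def2 _ _ H1) as [H1a H1b].
  destruct (P Ha0 E) as [y [Hy Hj]].
  apply Hn. exists y. split. lra. intros j Hjk x Hx. specialize (Hj j Hjk x Hx). lra.
Qed.

Lemma Qk_all k : Qk k.
Proof.
  induction k.
  - intros a b Ha Hab Hb. exists 1. split. lra. intros E. exists a. split. lra. intros j Hj. lia.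
  - intros a b Ha Hab Hb.
    destruct (unif_c a b Hab ltac:(lra) ltac:(lra)) as [l [Hl [e [He H]]]].
    destruct (Qk_unif k IHk l Hl) as [eps' [Heps' Hu]].
    exists (Rmin e eps'). split. apply Rmin_pos; auto.
    intros E. destruct (H (E k)) as [a' [Ha'1 [Ha'2 Ha'3]]].
    destruct (Hu a' ltac:(lra) ltac:(lra) E) as [y [Hy Hj]].
    exists y. split. lra. intros j Hjk x Hx.
    destruct (Nat.eq_dec j k) as [Ej|Ej].
    + subst j. eapply Rle_trans. apply Rmin_l. apply Ha'3; auto.
    + eapply Rle_trans. apply Rmin_r. apply Hj; auto. lia.
Qed.

End Final.

Theorem mainTheorem2 (rho : R) (v : C -> C) :
  0 < rho ->
  analytic_on_strip rho v ->
  bounded_on_strip rho v ->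
  one_periodic_on_strip rho v ->
  nonconstant_on_strip rho v ->
  forall delta : R, 0 < delta < rho ->
  forall k : nat,
  exists eps : R, 0 < eps /\
    forall E : nat -> R,
      exists y : R, delta / 2 <= y <= delta /\
        forall j : nat, (j < k)%nat ->
          exists m : R, m > eps /\
            forall x : R, 0 <= x <= 1 ->
              m <= Cmod (Cminus (v (x, y)) (RtoC (E j))).
Proof.
  intros Hrho Han [M HM] _ Hnc delta Hd k.
  destruct (Qk_all rho v Han M HM Hnc delta Hd k (delta / 2) delta) as [eps [Heps H]]; try lra.
  exists (eps / 2). split. lra.
  intros E. destruct (H E) as [y [Hy Hj]]. exists y. split; auto.
  intros j Hjk. exists eps. split. lra. intros x Hx. apply Hj; auto.
Qed.
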